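(* Let $m\ge 2$ be an integer and let $h:\mathbb R\to\mathbb R$ be a $2\pi$-periodic function of class $C^m$. Then $$0\le \frac{(-1)^m}{2}(m-1)!\,(m+1)!\int_0^{2\pi}\big(h(t)^2-\dot h(t)^2\big)dt+\frac{(-1)^{m-1}(m!)^2}{2\pi}\Big(\int_0^{2\pi}h(t)\,dt\Big)^2+\sum_{k=1}^{m-1}S_{m,k}\int_0^{2\pi}\big(h^{(k+1)}(t)+h^{(k-1)}(t)\big)^2dt.$$ Equality holds if and only if $h(t)=\sum_{n=0}^{m}\big(\alpha_n\cos(nt)+\beta_n\sin(nt)\big)$ for some real constants $\alpha_n,\beta_n$.
   Context: For $m\ge2$, let $P_m(t)=\prod_{j=2}^m(t-j^2)$ and let $S_{m,1},\dots,S_{m,m-1}$ be the coefficients of the polynomial $\mathcal S_m(t)=\frac{P_m(t)-P_m(1)}{t-1}=\sum_{k=1}^{m-1}S_{m,k}t^{k-1}$. $h^{(k)}$ is the $k$-th derivative, $\dot h=h'$. *)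

(* Defs.v *)
From Stdlib Require Import Reals Lra Lia List.
From Coquelicot Require Import Coquelicot.
Open Scope R_scope.

Definition sumR (a n : nat) (f : nat -> R) : R :=
  fold_right Rplus 0 (map f (seq a n)).

(* P_m(t) = prod_{j=2}^m (t - j^2)  (empty product = 1 for m <= 1) *)
Fixpoint Pm (m : nat) (t : R) : R :=
  match m with
  | O => 1
  | S m' => match m' with
            | O => 1
            | S _ => Pm m' t * (t - (INR m) ^ 2)
            end
  end.

Definition Cm (m : nat) (h : R -> R) : Prop :=
  (forall k, (k < m)%nat -> forall x, ex_derive (Derive_n h k) x) /\
  (forall x, continuous (Derive_n h m) x).

(* Main.v *)
Require Import Defs.
From Stdlib Require Import Reals List Arith Factorial.
From Coquelicot Require Import Coquelicot.
From Stdlib Require Import Lra Lia Classical.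
Open Scope R_scope.

Lemma sumR_0 a f : sumR a 0 f = 0.
Proof. reflexivity. Qed.
Lemma sumR_S a n f : sumR a (S n) f = f a + sumR (S a) n f.
Proof. reflexivity. Qed.
Lemma sumR_Sr a n f : sumR a (S n) f = sumR a n f + f (a + n)%nat.
Proof.
  unfold sumR. rewrite seq_S, map_app, fold_right_app. simpl.
  generalize (f (a+n)%nat). intro r.
  induction (map f (seq a n)); simpl; [lra|]. rewrite IHl. lra.
Qed.
Lemma sumR_ext a n f g : (forall k, (a <= k < a + n)%nat -> f k = g k) -> sumR a n f = sumR a n g.
Proof.
  revert a. induction n; intros a H; [reflexivity|].
  rewrite !sumR_S. f_equal. apply H; lia. apply IHn. intros; apply H; lia.
Qed.
Lemma sumR_plus a n f g : sumR a n (fun k => f k + g k) = sumR a n f + sumR a n g.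
Proof. revert a; induction n; intros; [rewrite !sumR_0; lra|]. rewrite !sumR_S, IHn. lra. Qed.
Lemma sumR_minus a n f g : sumR a n (fun k => f k - g k) = sumR a n f - sumR a n g.
Proof. revert a; induction n; intros; [rewrite !sumR_0; lra|]. rewrite !sumR_S, IHn. lra. Qed.
Lemma sumR_scal a n c f : sumR a n (fun k => c * f k) = c * sumR a n f.
Proof. revert a; induction n; intros; [rewrite !sumR_0; lra|]. rewrite !sumR_S, IHn. lra. Qed.
Lemma sumR_const0 a n : sumR a n (fun _ => 0) = 0.
Proof. revert a; induction n; intros; [reflexivity|]. rewrite sumR_S, IHn. lra. Qed.
Lemma sumR_le a n f g : (forall k, (a <= k < a + n)%nat -> f k <= g k) -> sumR a n f <= sumR a n g.
Proof.
  revert a. induction n; intros a H; [rewrite !sumR_0; lra|].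
  rewrite !sumR_S. assert (f a <= g a) by (apply H; lia).
  assert (sumR (S a) n f <= sumR (S a) n g) by (apply IHn; intros; apply H; lia). lra.
Qed.
Lemma sumR_nonneg a n f : (forall k, (a <= k < a + n)%nat -> 0 <= f k) -> 0 <= sumR a n f.
Proof. intros H. rewrite <- (sumR_const0 a n). apply sumR_le. exact H. Qed.
Lemma sumR_swap a n b m (F : nat -> nat -> R) :
  sumR a n (fun i => sumR b m (fun j => F i j)) = sumR b m (fun j => sumR a n (fun i => F i j)).
Proof.
  revert a. induction n; intros a.
  - rewrite sumR_0. symmetry. rewrite <- (sumR_const0 b m). apply sumR_ext. intros; reflexivity.
  - rewrite sumR_S, IHn. rewrite <- sumR_plus. apply sumR_ext. intros. rewrite sumR_S. reflexivity.
Qed.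
Lemma sumR_split a n p f : sumR a (n + p) f = sumR a n f + sumR (a + n) p f.
Proof.
  revert a. induction n; intros a.
  - change (0 + p)%nat with p. rewrite Nat.add_0_r, sumR_0. lra.
  - change (S n + p)%nat with (S (n + p)). rewrite !sumR_S, IHn.
    replace (S a + n)%nat with (a + S n)%nat by lia. lra.
Qed.
Lemma sumR_delta a n k (F : nat -> R) :
  sumR a n (fun i => if Nat.eqb i k then F i else 0) =
  if andb (Nat.leb a k) (Nat.ltb k (a + n)) then F k else 0.
Proof.
  revert a. induction n; intros a.
  - rewrite sumR_0. rewrite Nat.add_0_r. destruct (Nat.leb a k) eqn:E1; destruct (Nat.ltb k a) eqn:E2; simpl; auto.
    apply Nat.leb_le in E1. apply Nat.ltb_lt in E2. lia.
  - rewrite sumR_S, IHn. destruct (Nat.eqb a k) eqn:E.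
    + apply Nat.eqb_eq in E. subst.
      replace (Nat.leb (S k) k) with false by (symmetry; apply Nat.leb_gt; lia).
      replace (Nat.leb k k) with true by (symmetry; apply Nat.leb_le; lia).
      replace (Nat.ltb k (k + S n)) with true by (symmetry; apply Nat.ltb_lt; lia). simpl. lra.
    + apply Nat.eqb_neq in E. rewrite Rplus_0_l.
      replace (S a + n)%nat with (a + S n)%nat by lia.
      destruct (Nat.leb (S a) k) eqn:E1; destruct (Nat.leb a k) eqn:E2; simpl; auto.
      * apply Nat.leb_le in E1. apply Nat.leb_gt in E2. lia.
      * apply Nat.leb_gt in E1. apply Nat.leb_le in E2. assert (a = k) by lia. lia.
Qed.

Lemma RInt_plusR (f g : R -> R) (a b : R) : ex_RInt f a b -> ex_RInt g a b ->
  RInt (fun x => f x + g x) a b = RInt f a b + RInt g a b.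
Proof. intros. exact (RInt_plus f g a b H H0). Qed.
Lemma RInt_minusR (f g : R -> R) (a b : R) : ex_RInt f a b -> ex_RInt g a b ->
  RInt (fun x => f x - g x) a b = RInt f a b - RInt g a b.
Proof. intros. exact (RInt_minus f g a b H H0). Qed.
Lemma RInt_scalR (f : R -> R) (c a b : R) : ex_RInt f a b -> RInt (fun x => c * f x) a b = c * RInt f a b.
Proof. intros. exact (RInt_scal f a b c H). Qed.
Lemma ex_RInt_plusR (f g : R -> R) (a b : R) : ex_RInt f a b -> ex_RInt g a b -> ex_RInt (fun x => f x + g x) a b.
Proof. intros. exact (ex_RInt_plus f g a b H H0). Qed.
Lemma ex_RInt_scalR (f : R -> R) (c a b : R) : ex_RInt f a b -> ex_RInt (fun x => c * f x) a b.
Proof. intros. exact (ex_RInt_scal f a b c H). Qed.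
Lemma RInt_constR (a b c : R) : RInt (fun _ => c) a b = (b - a) * c.
Proof. exact (RInt_const a b c). Qed.
Lemma ex_RInt_sumR i n (F : nat -> R -> R) (a b : R) : (forall k, ex_RInt (F k) a b) ->
  ex_RInt (fun x => sumR i n (fun k => F k x)) a b.
Proof.
  intros H. revert i. induction n; intros i.
  - apply (ex_RInt_ext (fun _ => 0)). intros; reflexivity. apply ex_RInt_const.
  - apply (ex_RInt_ext (fun x => F i x + sumR (S i) n (fun k => F k x))).
    intros; reflexivity. apply ex_RInt_plusR; auto.
Qed.
Lemma RInt_sumR i n (F : nat -> R -> R) (a b : R) : (forall k, ex_RInt (F k) a b) ->
  RInt (fun x => sumR i n (fun k => F k x)) a b = sumR i n (fun k => RInt (F k) a b).
Proof.
  intros H. revert i. induction n; intros i.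
  - rewrite sumR_0. rewrite (RInt_ext _ (fun _ => 0)). rewrite RInt_constR. lra. intros; reflexivity.
  - rewrite sumR_S. rewrite (RInt_ext _ (fun x => F i x + sumR (S i) n (fun k => F k x))).
    rewrite RInt_plusR; auto. rewrite IHn. reflexivity. apply ex_RInt_sumR; auto.
    intros; reflexivity.
Qed.

Lemma cont_plus (f g : R -> R) (x : R) : continuous f x -> continuous g x -> continuous (fun t => f t + g t) x.
Proof. intros. exact (continuous_plus f g x H H0). Qed.
Lemma cont_minus (f g : R -> R) (x : R) : continuous f x -> continuous g x -> continuous (fun t => f t - g t) x.
Proof. intros. exact (continuous_minus f g x H H0). Qed.
Lemma cont_mult (f g : R -> R) (x : R) : continuous f x -> continuous g x -> continuous (fun t => f t * g t) x.
Proof. intros. exact (continuous_mult f g x H H0). Qed.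
Lemma cont_const (c x : R) : @continuous R_UniformSpace R_UniformSpace (fun _ : R => c) x.
Proof. apply continuous_const. Qed.
Lemma cont_cos c (x : R) : continuous (fun t => cos (c * t)) x.
Proof. apply (ex_derive_continuous (K:=R_AbsRing) (V:=R_NormedModule)). auto_derive. auto. Qed.
Lemma cont_sin c (x : R) : continuous (fun t => sin (c * t)) x.
Proof. apply (ex_derive_continuous (K:=R_AbsRing) (V:=R_NormedModule)). auto_derive. auto. Qed.
Lemma cont_pow (f : R -> R) n (x : R) : continuous f x -> continuous (fun t => f t ^ n) x.
Proof.
  intros H. induction n.
  - apply (continuous_ext (fun _ => 1)). intros; simpl; auto. apply cont_const.
  - apply (continuous_ext (fun t => f t * f t ^ n)). intros; simpl; auto. apply cont_mult; auto.
Qed.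
Lemma cont_sumR i n (F : nat -> R -> R) (x : R) : (forall k, continuous (F k) x) ->
  continuous (fun t => sumR i n (fun k => F k t)) x.
Proof.
  intros H. revert i. induction n; intros i.
  - apply (continuous_ext (fun _ => 0)). intros; reflexivity. apply cont_const.
  - apply (continuous_ext (fun t => F i t + sumR (S i) n (fun k => F k t))).
    intros; reflexivity. apply cont_plus; auto.
Qed.

Ltac cont := repeat first
  [ apply cont_plus | apply cont_minus | apply cont_mult | apply cont_pow
  | apply cont_cos | apply cont_sin | apply cont_const | apply continuous_id
  | apply cont_sumR; intro | assumption | (progress auto) ].

Lemma ex_RInt_cont (f : R -> R) a b : (forall x, continuous f x) -> ex_RInt f a b.
Proof. intros H. apply (ex_RInt_continuous (V:=R_CompleteNormedModule)). intros; apply H. Qed.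
Lemma RInt_extR (f g : R -> R) (a b : R) :
  (forall x, Rmin a b < x < Rmax a b -> f x = g x) -> RInt f a b = RInt g a b.
Proof. intros. exact (RInt_ext f g a b H). Qed.
Lemma ex_RInt_extR (f g : R -> R) (a b : R) :
  (forall x, Rmin a b < x < Rmax a b -> f x = g x) -> ex_RInt f a b -> ex_RInt g a b.
Proof. intros. exact (ex_RInt_ext f g a b H H0). Qed.
Ltac fixeq := match goal with |- @eq _ ?x ?y => change (@eq R x y) end.

Lemma exc (c : R) a b : ex_RInt (fun t => cos (c * t)) a b.
Proof. apply ex_RInt_cont; intros; apply cont_cos. Qed.
Lemma exs (c : R) a b : ex_RInt (fun t => sin (c * t)) a b.
Proof. apply ex_RInt_cont; intros; apply cont_sin. Qed.

Definition Ic (j : nat) : R := if Nat.eqb j 0 then 2 * PI else 0.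

Lemma int_cos a j : RInt (fun t => cos (INR j * t)) a (a + 2 * PI) = Ic j.
Proof.
  unfold Ic. destruct (Nat.eqb j 0) eqn:E.
  - apply Nat.eqb_eq in E. subst. rewrite (RInt_extR _ (fun _ => 1)).
    rewrite RInt_constR. lra. intros. simpl. rewrite Rmult_0_l, cos_0. reflexivity.
  - apply Nat.eqb_neq in E. assert (Hj : INR j <> 0) by (apply not_0_INR; auto).
    apply is_RInt_unique.
    replace 0 with (minus (sin (INR j * (a + 2*PI)) / INR j) (sin (INR j * a) / INR j)).
    + apply (is_RInt_derive (fun t => sin (INR j * t) / INR j)).
      * intros. auto_derive; auto. field. auto.
      * intros. apply cont_cos.
    + unfold minus, plus, opp; simpl.
      replace (INR j * (a + 2 * PI)) with (INR j * a + 2 * INR j * PI) by ring.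
      rewrite sin_period. field. auto.
Qed.

Lemma int_sin a j : RInt (fun t => sin (INR j * t)) a (a + 2 * PI) = 0.
Proof.
  destruct (Nat.eq_dec j 0) as [E|E].
  - subst. rewrite (RInt_extR _ (fun _ => 0)). rewrite RInt_constR. lra. intros. simpl. rewrite Rmult_0_l, sin_0. reflexivity.
  - assert (Hj : INR j <> 0) by (apply not_0_INR; auto).
    apply is_RInt_unique.
    replace 0 with (minus (- cos (INR j * (a + 2*PI)) / INR j) (- cos (INR j * a) / INR j)).
    + apply (is_RInt_derive (fun t => - cos (INR j * t) / INR j)).
      * intros. auto_derive; auto. field. auto.
      * intros. apply cont_sin.
    + unfold minus, plus, opp; simpl.
      replace (INR j * (a + 2 * PI)) with (INR j * a + 2 * INR j * PI) by ring.
      rewrite cos_period. field. auto.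
Qed.

Definition nd (n k : nat) : nat := (n - k + (k - n))%nat.

Lemma diff_cos n k t : cos (INR n * t - INR k * t) = cos (INR (nd n k) * t).
Proof.
  unfold nd. destruct (le_dec k n).
  - replace (k - n)%nat with 0%nat by lia. rewrite Nat.add_0_r, minus_INR by lia. f_equal. ring.
  - replace (n - k)%nat with 0%nat by lia. rewrite Nat.add_0_l, minus_INR by lia.
    rewrite <- cos_neg. f_equal. ring.
Qed.
Lemma diff_sin_int a n k : RInt (fun t => sin ((INR n - INR k) * t)) a (a + 2*PI) = 0.
Proof.
  destruct (le_dec k n).
  - rewrite (RInt_extR _ (fun t => sin (INR (n - k) * t))). apply int_sin.
    intros. rewrite minus_INR by lia. reflexivity.
  - rewrite (RInt_extR _ (fun t => -1 * sin (INR (k - n) * t))).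
    rewrite RInt_scalR by apply exs. rewrite int_sin. fixeq. ring.
    intros. rewrite minus_INR by lia.
    replace ((INR n - INR k) * x) with (- ((INR k - INR n) * x)) by ring. rewrite sin_neg. ring.
Qed.

Definition wc (n k : nat) : R := if Nat.eqb n k then (if Nat.eqb n 0 then 2 * PI else PI) else 0.
Definition ws (n k : nat) : R := if Nat.eqb n k then (if Nat.eqb n 0 then 0 else PI) else 0.



Lemma Ic_nd_add n k : (Ic (nd n k) + Ic (n + k)) / 2 = wc n k /\ (Ic (nd n k) - Ic (n + k)) / 2 = ws n k.
Proof.
  unfold Ic, wc, ws, nd.
  destruct (Nat.eqb_spec n k); destruct (Nat.eqb_spec n 0);
  destruct (Nat.eqb_spec (n - k + (k - n)) 0); destruct (Nat.eqb_spec (n + k) 0);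
  try (exfalso; lia); split; lra.
Qed.

Lemma orth_cc a n k : RInt (fun t => cos (INR n * t) * cos (INR k * t)) a (a + 2*PI) = wc n k.
Proof.
  rewrite (RInt_extR _ (fun t => /2 * cos (INR (nd n k) * t) + /2 * cos (INR (n + k) * t))).
  - rewrite RInt_plusR by (apply ex_RInt_scalR; apply exc).
    rewrite !RInt_scalR by apply exc. rewrite !int_cos.
    destruct (Ic_nd_add n k). fixeq. lra.
  - intros. rewrite <- diff_cos, plus_INR, cos_minus.
    replace ((INR n + INR k) * x) with (INR n * x + INR k * x) by ring. rewrite cos_plus. field.
Qed.
Lemma orth_ss a n k : RInt (fun t => sin (INR n * t) * sin (INR k * t)) a (a + 2*PI) = ws n k.
Proof.
  rewrite (RInt_extR _ (fun t => /2 * cos (INR (nd n k) * t) + (-/2) * cos (INR (n + k) * t))).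
  - rewrite RInt_plusR by (apply ex_RInt_scalR; apply exc).
    rewrite !RInt_scalR by apply exc. rewrite !int_cos.
    destruct (Ic_nd_add n k). fixeq. lra.
  - intros. rewrite <- diff_cos, plus_INR, cos_minus.
    replace ((INR n + INR k) * x) with (INR n * x + INR k * x) by ring. rewrite cos_plus. field.
Qed.

Lemma orth_sc a n k : RInt (fun t => sin (INR n * t) * cos (INR k * t)) a (a + 2*PI) = 0.
Proof.
  rewrite (RInt_extR _ (fun t => /2 * sin ((INR n - INR k) * t) + /2 * sin (INR (n + k) * t))).
  - rewrite RInt_plusR by (apply ex_RInt_scalR; apply exs).
    rewrite !RInt_scalR by apply exs.
    rewrite diff_sin_int, (int_sin a (n + k)). fixeq. ring.
  - intros. rewrite plus_INR.
    replace ((INR n - INR k) * x) with (INR n * x - INR k * x) by ring.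
    replace ((INR n + INR k) * x) with (INR n * x + INR k * x) by ring. rewrite sin_plus, sin_minus. field.
Qed.
Lemma orth_cs a n k : RInt (fun t => cos (INR n * t) * sin (INR k * t)) a (a + 2*PI) = 0.
Proof.
  rewrite (RInt_extR _ (fun t => sin (INR k * t) * cos (INR n * t))). apply orth_sc.
  intros; ring.
Qed.

Definition Ac (a : R) (f : R -> R) (k : nat) : R := RInt (fun t => f t * cos (INR k * t)) a (a + 2 * PI).
Definition As (a : R) (f : R -> R) (k : nat) : R := RInt (fun t => f t * sin (INR k * t)) a (a + 2 * PI).
Definition TP (al be : nat -> R) (N : nat) (t : R) : R :=
  sumR 0 (S N) (fun n => al n * cos (INR n * t) + be n * sin (INR n * t)).
Definition CI (a : R) (f : R -> R) : Prop := forall x, a <= x <= a + 2 * PI -> continuous f x.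
Definition w (k : nat) : R := if Nat.eqb k 0 then / (2 * PI) else / PI.
Definition En (a : R) (f : R -> R) (N : nat) : R :=
  sumR 0 (S N) (fun n => w n * (Ac a f n ^ 2 + As a f n ^ 2)).

Lemma PI2_pos : 0 < 2 * PI.
Proof. pose proof PI_RGT_0. lra. Qed.

Lemma exI (f : R -> R) a : CI a f -> ex_RInt f a (a + 2 * PI).
Proof.
  intros H. apply (ex_RInt_continuous (V:=R_CompleteNormedModule)). intros z Hz.
  apply H. pose proof PI2_pos. rewrite Rmin_left, Rmax_right in Hz by lra. lra.
Qed.

Lemma CI_mult a f g : CI a f -> CI a g -> CI a (fun t => f t * g t).
Proof. intros Hf Hg x Hx. apply cont_mult; auto. Qed.
Lemma CI_plus a f g : CI a f -> CI a g -> CI a (fun t => f t + g t).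
Proof. intros Hf Hg x Hx. apply cont_plus; auto. Qed.
Lemma CI_minus a f g : CI a f -> CI a g -> CI a (fun t => f t - g t).
Proof. intros Hf Hg x Hx. apply cont_minus; auto. Qed.
Lemma CI_cos a c : CI a (fun t => cos (c * t)).
Proof. intros x _. apply cont_cos. Qed.
Lemma CI_sin a c : CI a (fun t => sin (c * t)).
Proof. intros x _. apply cont_sin. Qed.
Lemma CI_TP a al be N : CI a (TP al be N).
Proof. intros x _. unfold TP. apply cont_sumR. intros. apply cont_plus; apply cont_mult; try apply cont_const; [apply cont_cos | apply cont_sin]. Qed.
Lemma CI_all a (f : R -> R) : (forall x, continuous f x) -> CI a f.
Proof. intros H x _. auto. Qed.

Lemma exgc a g (c : R) : CI a g -> ex_RInt (fun t => g t * cos (c * t)) a (a + 2 * PI).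
Proof. intros. apply exI. apply CI_mult; auto. apply CI_cos. Qed.
Lemma exgs a g (c : R) : CI a g -> ex_RInt (fun t => g t * sin (c * t)) a (a + 2 * PI).
Proof. intros. apply exI. apply CI_mult; auto. apply CI_sin. Qed.

Lemma int_TP a g al be N : CI a g ->
  RInt (fun t => g t * TP al be N t) a (a + 2 * PI) =
  sumR 0 (S N) (fun n => al n * Ac a g n + be n * As a g n).
Proof.
  intros Hg. unfold TP.
  rewrite (RInt_extR _ (fun t => sumR 0 (S N) (fun n =>
       al n * (g t * cos (INR n * t)) + be n * (g t * sin (INR n * t))))).
  - rewrite RInt_sumR.
    + apply sumR_ext. intros n _.
      rewrite RInt_plusR.
      2: apply ex_RInt_scalR, exgc; auto.
      2: apply ex_RInt_scalR, exgs; auto.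
      rewrite RInt_scalR by (apply exgc; auto).
      rewrite RInt_scalR by (apply exgs; auto).
      reflexivity.
    + intros n. apply ex_RInt_plusR.
      apply ex_RInt_scalR, exgc; auto.
      apply ex_RInt_scalR, exgs; auto.
  - intros. generalize (S N). intros M. generalize 0%nat. induction M; intros i.
    + rewrite !sumR_0. ring.
    + rewrite !sumR_S, <- IHM. ring.
Qed.

Definition cc (k : nat) : R := if Nat.eqb k 0 then 2 * PI else PI.
Definition cs (k : nat) : R := if Nat.eqb k 0 then 0 else PI.

Lemma TP_Ac a al be N k : Ac a (TP al be N) k = if Nat.leb k N then al k * cc k else 0.
Proof.
  unfold Ac. rewrite (RInt_extR _ (fun t => cos (INR k * t) * TP al be N t)) by (intros; ring).
  rewrite int_TP by apply CI_cos.
  rewrite (sumR_ext _ _ _ (fun n => if Nat.eqb n k then al n * cc n else 0)).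
  - rewrite sumR_delta. destruct (Nat.leb_spec k N); destruct (Nat.leb_spec 0 k); destruct (Nat.ltb_spec k (0 + S N)); simpl; try lia; reflexivity.
  - intros n Hn. unfold Ac, As. rewrite orth_cc, orth_cs. unfold wc, cc.
    destruct (Nat.eqb_spec k n); destruct (Nat.eqb_spec n k); try lia; subst;
    destruct (Nat.eqb_spec n 0); ring.
Qed.

Lemma TP_As a al be N k : As a (TP al be N) k = if Nat.leb k N then be k * cs k else 0.
Proof.
  unfold As. rewrite (RInt_extR _ (fun t => sin (INR k * t) * TP al be N t)) by (intros; ring).
  rewrite int_TP by apply CI_sin.
  rewrite (sumR_ext _ _ _ (fun n => if Nat.eqb n k then be n * cs n else 0)).
  - rewrite sumR_delta. destruct (Nat.leb_spec k N); destruct (Nat.leb_spec 0 k); destruct (Nat.ltb_spec k (0 + S N)); simpl; try lia; reflexivity.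
  - intros n Hn. unfold Ac, As. rewrite orth_sc, orth_ss. unfold ws, cs.
    destruct (Nat.eqb_spec k n); destruct (Nat.eqb_spec n k); try lia; subst;
    destruct (Nat.eqb_spec n 0); ring.
Qed.

Lemma As_0 a f : As a f 0 = 0.
Proof.
  unfold As. rewrite (RInt_extR _ (fun _ => 0)). rewrite RInt_constR. fixeq. ring.
  intros. simpl. rewrite Rmult_0_l, sin_0. ring.
Qed.

Definition Sp (a : R) (f : R -> R) (N : nat) : R -> R :=
  TP (fun n => w n * Ac a f n) (fun n => w n * As a f n) N.

Lemma w_cc k : w k * cc k = 1.
Proof. unfold w, cc. pose proof PI_RGT_0. destruct (Nat.eqb k 0); field; lra. Qed.

Lemma int_f_Sp a f N : CI a f ->
  RInt (fun t => f t * Sp a f N t) a (a + 2 * PI) = En a f N.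
Proof.
  intros Hf. unfold Sp. rewrite int_TP by auto. unfold En. apply sumR_ext. intros. ring.
Qed.

Lemma int_Sp_Sp a f N : CI a f ->
  RInt (fun t => Sp a f N t * Sp a f N t) a (a + 2 * PI) = En a f N.
Proof.
  intros Hf. unfold Sp at 2. rewrite int_TP by apply CI_TP. unfold En. apply sumR_ext. intros n Hn.
  unfold Sp. rewrite TP_Ac, TP_As.
  replace (Nat.leb n N) with true by (symmetry; apply Nat.leb_le; lia).
  pose proof (w_cc n).
  destruct (Nat.eqb_spec n 0).
  - subst. rewrite As_0. unfold cs. simpl. replace (w 0 * Ac a f 0 * cc 0) with (Ac a f 0 * (w 0 * cc 0)) by ring.
    rewrite H. ring.
  - unfold cs. replace (Nat.eqb n 0) with false by (symmetry; apply Nat.eqb_neq; auto).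
    unfold w, cc in *. replace (Nat.eqb n 0) with false in * by (symmetry; apply Nat.eqb_neq; auto).
    pose proof PI_RGT_0. field. lra.
Qed.

Lemma bessel_id a f N : CI a f ->
  RInt (fun t => (f t - Sp a f N t) ^ 2) a (a + 2 * PI) = RInt (fun t => f t ^ 2) a (a + 2 * PI) - En a f N.
Proof.
  intros Hf.
  assert (HS : CI a (Sp a f N)) by apply CI_TP.
  assert (E1 : ex_RInt (fun t => f t * f t) a (a + 2 * PI)) by (apply exI; apply CI_mult; auto).
  assert (E2 : ex_RInt (fun t => f t * Sp a f N t) a (a + 2 * PI)) by (apply exI; apply CI_mult; auto).
  assert (E3 : ex_RInt (fun t => Sp a f N t * Sp a f N t) a (a + 2 * PI)) by (apply exI; apply CI_mult; auto).
  assert (E4 : ex_RInt (fun t => 2 * (f t * Sp a f N t)) a (a + 2 * PI)) by (apply ex_RInt_scalR; auto).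
  assert (E5 : ex_RInt (fun t => f t * f t - 2 * (f t * Sp a f N t)) a (a + 2 * PI))
    by (apply (ex_RInt_minus (V:=R_NormedModule)); auto).
  rewrite (RInt_extR _ (fun t => (f t * f t - 2 * (f t * Sp a f N t)) + Sp a f N t * Sp a f N t)) by (intros; ring).
  rewrite (RInt_plusR _ _ _ _ E5 E3).
  rewrite (RInt_minusR _ _ _ _ E1 E4).
  rewrite (RInt_scalR _ _ _ _ E2).
  rewrite int_f_Sp, int_Sp_Sp by auto.
  rewrite (RInt_extR (fun t => f t ^ 2) (fun t => f t * f t)) by (intros; ring).
  fixeq. ring.
Qed.

Lemma bessel a f N : CI a f -> En a f N <= RInt (fun t => f t ^ 2) a (a + 2 * PI).
Proof.
  intros Hf. assert (0 <= RInt (fun t => (f t - Sp a f N t) ^ 2) a (a + 2 * PI)).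
  { apply RInt_ge_0. pose proof PI2_pos; lra.
    apply exI. intros x Hx. apply cont_pow. apply cont_minus; auto. exact (CI_TP a _ _ N x Hx).
    intros. apply pow2_ge_0. }
  rewrite bessel_id in H by auto. lra.
Qed.

Definition per (f : R -> R) : Prop := forall t, f (t + 2 * PI) = f t.
Definition CA (f : R -> R) : Prop := forall x, continuous f x.

Lemma RInt_translate (f : R -> R) (c a b : R) : CA f ->
  RInt (fun t => f (t + c)) a b = RInt f (a + c) (b + c).
Proof.
  intros Hf.
  pose proof (RInt_comp_lin (V:=R_CompleteNormedModule) f 1 c a b).
  replace (1 * a + c) with (a + c) in H by ring. replace (1 * b + c) with (b + c) in H by ring.
  rewrite <- H. apply RInt_extR. intros. unfold scal; simpl. unfold mult; simpl. rewrite Rmult_1_l. f_equal. ring.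
  apply ex_RInt_cont; auto.
Qed.

Lemma per_shift (f : R -> R) a : per f -> CA f -> RInt f a (a + 2 * PI) = RInt f 0 (2 * PI).
Proof.
  intros Hp Hc.
  assert (Ex : forall u v, ex_RInt f u v) by (intros; apply ex_RInt_cont; auto).
  rewrite <- (RInt_Chasles (V:=R_CompleteNormedModule) f a 0 (a + 2 * PI)) by auto.
  rewrite <- (RInt_Chasles (V:=R_CompleteNormedModule) f 0 (2 * PI) (a + 2 * PI)) by auto.
  replace (RInt f (2 * PI) (a + 2 * PI)) with (RInt f 0 a).
  - rewrite <- (opp_RInt_swap (V:=R_CompleteNormedModule) f 0 a) by auto.
    unfold plus, opp; simpl. fixeq. ring.
  - rewrite <- (Rplus_0_l (2 * PI)) at 1. rewrite <- RInt_translate by auto.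
    apply RInt_extR. intros. symmetry. apply Hp.
Qed.

Lemma per_Derive f : per f -> per (Derive f).
Proof.
  intros Hp t. unfold Derive. f_equal. apply Lim_ext. intros y.
  replace (t + 2 * PI + y) with ((t + y) + 2 * PI) by ring. rewrite !Hp. reflexivity.
Qed.

Lemma per_Derive_n f k : per f -> per (Derive_n f k).
Proof.
  intros Hp. induction k. simpl. exact Hp. intros t. simpl. apply per_Derive. exact IHk.
Qed.

Lemma cos_2PIn n : cos (INR n * (2 * PI)) = 1.
Proof.
  replace (INR n * (2 * PI)) with (0 + 2 * INR n * PI) by ring. rewrite cos_period. apply cos_0.
Qed.
Lemma sin_2PIn n : sin (INR n * (2 * PI)) = 0.
Proof.
  replace (INR n * (2 * PI)) with (0 + 2 * INR n * PI) by ring. rewrite sin_period. apply sin_0.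
Qed.

Lemma coef_deriv (f : R -> R) n : per f -> (forall x, ex_derive f x) -> CA (Derive f) ->
  Ac 0 (Derive f) n = INR n * As 0 f n /\ As 0 (Derive f) n = - INR n * Ac 0 f n.
Proof.
  intros Hp Hd Hc.
  assert (Cf : CA f) by (intros x; apply (ex_derive_continuous (K:=R_AbsRing) (V:=R_NormedModule)); auto).
  assert (CI0f : CI 0 f) by (apply CI_all; auto).
  assert (CI0d : CI 0 (Derive f)) by (apply CI_all; auto).
  assert (f2 : f (2 * PI) = f 0) by (rewrite <- (Rplus_0_l (2 * PI)); apply Hp).
  split.
  - assert (H : is_RInt (fun t => Derive f t * cos (INR n * t) + - INR n * (f t * sin (INR n * t))) 0 (0 + 2 * PI)
                 (minus (f (0 + 2 * PI) * cos (INR n * (0 + 2 * PI))) (f 0 * cos (INR n * 0)))).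
    { apply (is_RInt_derive (fun t => f t * cos (INR n * t))).
      - intros x _. apply (is_derive_ext (fun t => f t * cos (INR n * t))). intros; reflexivity.
        evar (l : R).
        replace (Derive f x * cos (INR n * x) + - INR n * (f x * sin (INR n * x))) with l.
        apply (is_derive_mult (K:=R_AbsRing) f (fun t => cos (INR n * t))).
        apply Derive_correct; auto.
        auto_derive; auto.
        intros; unfold mult; simpl; ring.
        unfold l; simpl. unfold plus, mult, scal; simpl. unfold mult; simpl. ring.
      - intros x _. apply cont_plus. apply cont_mult; auto. apply cont_cos.
        apply cont_mult. apply cont_const. apply cont_mult; auto. apply cont_sin. }
    apply (is_RInt_unique (V:=R_CompleteNormedModule)) in H.
    rewrite RInt_plusR in H. rewrite RInt_scalR in H.
    2: apply exgs; auto. 2: apply exgc; auto. 2: apply ex_RInt_scalR; apply exgs; auto.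
    rewrite Rplus_0_l in H. rewrite f2, cos_2PIn, Rmult_0_r, cos_0 in H.
    unfold Ac, As. rewrite Rplus_0_l. unfold minus, plus, opp in H; simpl in H. fixeq. lra.
  - assert (H : is_RInt (fun t => Derive f t * sin (INR n * t) + INR n * (f t * cos (INR n * t))) 0 (0 + 2 * PI)
                 (minus (f (0 + 2 * PI) * sin (INR n * (0 + 2 * PI))) (f 0 * sin (INR n * 0)))).
    { apply (is_RInt_derive (fun t => f t * sin (INR n * t))).
      - intros x _. 
        evar (l : R).
        replace (Derive f x * sin (INR n * x) + INR n * (f x * cos (INR n * x))) with l.
        apply (is_derive_mult (K:=R_AbsRing) f (fun t => sin (INR n * t))).
        apply Derive_correct; auto.
        auto_derive; auto.
        intros; unfold mult; simpl; ring.
        unfold l; simpl. unfold plus, mult, scal; simpl. unfold mult; simpl. ring.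
      - intros x _. apply cont_plus. apply cont_mult; auto. apply cont_sin.
        apply cont_mult. apply cont_const. apply cont_mult; auto. apply cont_cos. }
    apply (is_RInt_unique (V:=R_CompleteNormedModule)) in H.
    rewrite RInt_plusR in H. rewrite RInt_scalR in H.
    2: apply exgc; auto. 2: apply exgs; auto. 2: apply ex_RInt_scalR; apply exgc; auto.
    rewrite Rplus_0_l in H. rewrite f2, sin_2PIn, !Rmult_0_r, ?sin_0 in H.
    unfold Ac, As. rewrite Rplus_0_l. unfold minus, plus, opp in H; simpl in H. fixeq. lra.
Qed.

Definition v (n : nat) : R := if Nat.eqb n 0 then / 2 else 1.
Definition K (N : nat) (u : R) : R := sumR 0 (S N) (fun n => v n * cos (INR n * u)).

Lemma CA_K N : CA (K N).
Proof. intros x. unfold K. apply cont_sumR. intros. apply cont_mult. apply cont_const. apply cont_cos. Qed.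

Lemma K_per N : per (K N).
Proof.
  intros t. unfold K. apply sumR_ext. intros. f_equal.
  replace (INR k * (t + 2 * PI)) with (INR k * t + 2 * INR k * PI) by ring. apply cos_period.
Qed.

Lemma w_v n : w n = v n / PI.
Proof. unfold w, v. pose proof PI_RGT_0. destruct (Nat.eqb n 0); field; lra. Qed.

Lemma D1 f N x : CA f ->
  Sp 0 f N x = / PI * RInt (fun t => f t * K N (t - x)) 0 (2 * PI).
Proof.
  intros Hf. unfold Sp, TP, K.
  rewrite (RInt_extR _ (fun t => sumR 0 (S N) (fun n =>
      (v n * cos (INR n * x)) * (f t * cos (INR n * t)) + (v n * sin (INR n * x)) * (f t * sin (INR n * t))))).
  - rewrite RInt_sumR.
    + rewrite <- sumR_scal. apply sumR_ext. intros n _.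
      rewrite RInt_plusR. rewrite !RInt_scalR.
      * unfold Ac, As. rewrite Rplus_0_l. rewrite w_v. fixeq. field. pose proof PI_RGT_0; lra.
      * pose proof (exgs 0 f (INR n) (CI_all 0 f Hf)). rewrite Rplus_0_l in H. exact H.
      * pose proof (exgc 0 f (INR n) (CI_all 0 f Hf)). rewrite Rplus_0_l in H. exact H.
      * apply ex_RInt_scalR. pose proof (exgc 0 f (INR n) (CI_all 0 f Hf)). rewrite Rplus_0_l in H. exact H.
      * apply ex_RInt_scalR. pose proof (exgs 0 f (INR n) (CI_all 0 f Hf)). rewrite Rplus_0_l in H. exact H.
    + intros n. apply ex_RInt_cont. intros y. apply cont_plus; apply cont_mult; try apply cont_const;
      apply cont_mult; auto; [apply cont_cos | apply cont_sin].
  - intros t _. rewrite <- sumR_scal. apply sumR_ext. intros n _.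
    replace (INR n * (t - x)) with (INR n * t - INR n * x) by ring. rewrite cos_minus. ring.
Qed.

Lemma D2 f N x : CA f -> per f ->
  RInt (fun t => f t * K N (t - x)) 0 (2 * PI) = RInt (fun u => f (u + x) * K N u) (- PI) PI.
Proof.
  intros Hf Hp.
  assert (Hc : CA (fun t => f t * K N (t - x))).
  { intros y. apply cont_mult; auto. apply (continuous_comp (fun t => t - x) (K N)).
    apply cont_minus. apply continuous_id. apply cont_const. apply CA_K. }
  rewrite <- (per_shift _ (x - PI)); auto.
  - transitivity (RInt (fun u => f (u + x) * K N (u + x - x)) (-PI) PI).
    + pose proof (RInt_translate _ x (-PI) PI Hc) as E. simpl in E. rewrite E. f_equal; ring.
    + apply RInt_extR. intros. f_equal. f_equal. ring.
  - intros t. rewrite Hp. replace (t + 2 * PI - x) with ((t - x) + 2 * PI) by ring. rewrite K_per. reflexivity.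
Qed.

Lemma D3 N : RInt (K N) (- PI) PI = PI.
Proof.
  replace PI with (- PI + 2 * PI) at 2 by ring. unfold K.
  rewrite RInt_sumR.
  - rewrite sumR_S. rewrite (sumR_ext _ _ _ (fun _ => 0)).
    + rewrite sumR_const0. rewrite RInt_scalR by apply exc. rewrite int_cos. unfold v, Ic. simpl. fixeq. field.
    + intros k Hk. rewrite RInt_scalR by apply exc. rewrite int_cos. unfold Ic.
      destruct (Nat.eqb_spec k 0). lia. ring.
  - intros. apply ex_RInt_scalR, exc.
Qed.

Lemma telescope N u : 2 * sin (u / 2) * K N u = sin ((INR N + / 2) * u).
Proof.
  induction N.
  - unfold K. rewrite sumR_S, sumR_0. unfold v. simpl. rewrite Rmult_0_l, cos_0.
    rewrite Rplus_0_l. replace (/ 2 * u) with (u / 2) by (unfold Rdiv; ring). field.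
  - unfold K in *. rewrite sumR_Sr. replace (0 + S N)%nat with (S N) by lia.
    replace (2 * sin (u / 2) * (sumR 0 (S N) (fun n => v n * cos (INR n * u)) + v (S N) * cos (INR (S N) * u)))
      with (2 * sin (u / 2) * sumR 0 (S N) (fun n => v n * cos (INR n * u)) + 2 * sin (u / 2) * v (S N) * cos (INR (S N) * u)) by ring.
    rewrite IHN. unfold v at 1. simpl Nat.eqb. rewrite S_INR.
    replace ((INR N + 1 + / 2) * u) with ((INR N + 1) * u + u / 2) by field.
    replace ((INR N + / 2) * u) with ((INR N + 1) * u - u / 2) by field.
    rewrite sin_plus, sin_minus. ring.
Qed.

Definition G (f : R -> R) (x u : R) : R :=
  if Req_EM_T u 0 then 2 * Derive f x else (f (u + x) - f x) / sin (u / 2).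

Lemma sin_half_nz u : u <> 0 -> - PI <= u <= PI -> sin (u / 2) <> 0.
Proof.
  intros H0 H1. pose proof PI_RGT_0.
  destruct (Rlt_dec 0 u).
  - apply Rgt_not_eq. apply sin_gt_0; lra.
  - replace (u / 2) with (- (- u / 2)) by field. rewrite sin_neg.
    assert (0 < sin (- u / 2)) by (apply sin_gt_0; lra). lra.
Qed.

Lemma lim_from_dpl (F : R -> R) x l : derivable_pt_lim F x l ->
  is_lim (fun h => (F (x + h) - F x) / h) 0 l.
Proof.
  intros H. apply is_lim_spec. intros eps. destruct (H eps (cond_pos eps)) as [d Hd].
  simpl. exists d. intros y Hy Hy0.
  unfold ball in Hy; simpl in Hy. unfold AbsRing_ball in Hy; simpl in Hy.
  unfold abs, minus, plus, opp in Hy; simpl in Hy. rewrite Ropp_0, Rplus_0_r in Hy.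
  apply Hd; auto.
Qed.

Lemma G_cont0 (f : R -> R) (x : R) : ex_derive f x -> continuity_pt (G f x) 0.
Proof.
  intros Hd. set (l := Derive f x).
  assert (H1 : derivable_pt_lim f x l) by (apply is_derive_Reals; apply Derive_correct; auto).
  assert (H2 : derivable_pt_lim (fun u => sin (u / 2)) 0 (/ 2)).
  { apply is_derive_Reals. auto_derive. auto. rewrite Rmult_0_l, cos_0. field. }
  apply lim_from_dpl in H1. apply lim_from_dpl in H2.
  pose proof (is_lim_div _ _ 0 l (/2) H1 H2) as H3.
  assert (H3' : is_lim (fun y => (f (x + y) - f x) / y / ((sin ((0 + y) / 2) - sin (0 / 2)) / y)) 0 (2 * l)).
  { replace (Finite (2 * l)) with (Rbar_div l (/ 2)). apply H3.
    - intros E. injection E. lra.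
    - simpl. auto.
    - simpl. f_equal. field. }
  apply is_lim_spec in H3'.
  intros eps Heps. destruct (H3' (mkposreal eps Heps)) as [d Hd'].
  exists (Rmin d 1). split. apply Rmin_pos; [apply cond_pos | lra]. intros y [[_ Hy0] Hy].
  simpl in Hy. unfold R_dist in Hy. rewrite Rminus_0_r in Hy.
  simpl. unfold R_dist. unfold G.
  destruct (Req_EM_T y 0) as [E|E]. { exfalso; auto. }
  destruct (Req_EM_T 0 0) as [_|E']; [|exfalso; auto].
  assert (Hb : ball 0 d y).
  { unfold ball; simpl. unfold AbsRing_ball; simpl. unfold abs, minus, plus, opp; simpl.
    rewrite Ropp_0, Rplus_0_r. pose proof (Rmin_l d 1). lra. }
  specialize (Hd' y Hb E). simpl in Hd'.
  replace ((f (y + x) - f x) / sin (y / 2)) with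
    ((f (x + y) - f x) / y / ((sin ((0 + y) / 2) - sin (0 / 2)) / y)).
  exact Hd'.
  rewrite Rplus_0_l, Rdiv_0_l, sin_0, Rminus_0_r. rewrite Rplus_comm.
  assert (sin (y / 2) <> 0).
  { apply sin_half_nz; auto. pose proof (Rmin_r d 1). pose proof PI2_1.
    apply Rabs_le_between. lra. }
  field. auto.
Qed.

Lemma G_cont (f : R -> R) (x u : R) : CA f -> ex_derive f x -> - PI <= u <= PI -> continuous (G f x) u.
Proof.
  intros Hc Hd Hu.
  destruct (Req_EM_T u 0) as [E|E].
  - subst. apply continuity_pt_filterlim. apply G_cont0. auto.
  - apply (continuous_ext_loc (G f x) (fun y => (f (y + x) - f x) * / sin (y / 2)) u).

    + assert (Hp : 0 < Rabs u) by (apply Rabs_pos_lt; auto).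
      exists (mkposreal _ Hp). intros y Hy. simpl in Hy.
      unfold ball in Hy; simpl in Hy. unfold AbsRing_ball in Hy; simpl in Hy.
      unfold abs, minus, plus, opp in Hy; simpl in Hy.
      unfold G. destruct (Req_EM_T y 0) as [E'|E'].
      * exfalso. subst. rewrite Rplus_0_l, Rabs_Ropp in Hy. lra.
      * reflexivity.
    + apply cont_mult.
      * apply cont_minus; [|apply cont_const].
        apply (continuous_comp (fun y => y + x) f). apply cont_plus. apply continuous_id. apply cont_const. apply Hc.
      * apply continuous_Rinv_comp.
        apply (ex_derive_continuous (K:=R_AbsRing) (V:=R_NormedModule)). auto_derive. auto.
        apply sin_half_nz; auto.
Qed.

Lemma terms_to_0 (c : nat -> R) M : (forall n, 0 <= c n) -> (forall N, sumR 0 (S N) c <= M) ->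
  forall eps, 0 < eps -> exists N0, forall n, (N0 <= n)%nat -> c n < eps.
Proof.
  intros Hc HM eps Heps.
  set (s := fun N => sumR 0 (S N) c).
  assert (Hmono : forall p q, (p <= q)%nat -> s p <= s q).
  { intros p q Hpq. induction Hpq. lra. unfold s in *. rewrite (sumR_Sr 0 (S m)). pose proof (Hc (0 + S m)%nat). lra. }
  set (E := fun r => exists N, r = s N).
  assert (Hb : bound E). { exists M. intros r [N ->]. apply HM. }
  assert (Hne : exists r, E r). { exists (s 0%nat). exists 0%nat. reflexivity. }
  destruct (completeness E Hb Hne) as [L [HL1 HL2]].
  destruct (classic (exists N, L - eps < s N)) as [[N1 HN1]|HN].
  - exists (S N1). intros n Hn.
    assert (s n <= L) by (apply HL1; exists n; reflexivity).
    destruct n. lia.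
    assert (s n = sumR 0 (S n) c) by reflexivity.
    assert (s (S n) = s n + c (S n)).
    { unfold s. rewrite sumR_Sr. replace (0 + S n)%nat with (S n) by lia. reflexivity. }
    assert (s N1 <= s n) by (apply Hmono; lia). lra.
  - exfalso. assert (L <= L - eps).
    { apply HL2. intros r [N ->]. apply Rnot_lt_le. intros H. apply HN. exists N. auto. }
    lra.
Qed.

Lemma RL a (phi : R -> R) : CI a phi -> forall eps, 0 < eps ->
  exists N0, forall n, (N0 <= n)%nat -> Rabs (Ac a phi n) < eps /\ Rabs (As a phi n) < eps.
Proof.
  intros Hphi eps Heps. pose proof PI_RGT_0.
  destruct (terms_to_0 (fun n => w n * (Ac a phi n ^ 2 + As a phi n ^ 2)) (RInt (fun t => phi t ^ 2) a (a + 2 * PI)))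
    with (eps := eps ^ 2 / PI) as [N0 HN0].
  - intros n. apply Rmult_le_pos. unfold w. destruct (Nat.eqb n 0); left; apply Rinv_0_lt_compat; lra.
    pose proof (pow2_ge_0 (Ac a phi n)). pose proof (pow2_ge_0 (As a phi n)). lra.
  - intros N. apply bessel. auto.
  - apply Rdiv_lt_0_compat; auto. apply pow_lt; auto.
  - exists (S N0). intros n Hn. specialize (HN0 n ltac:(lia)).
    unfold w in HN0. destruct (Nat.eqb_spec n 0). lia.
    assert (Ac a phi n ^ 2 + As a phi n ^ 2 < eps ^ 2).
    { apply (Rmult_lt_compat_l PI) in HN0; auto. field_simplify in HN0; lra. }
    pose proof (pow2_ge_0 (Ac a phi n)). pose proof (pow2_ge_0 (As a phi n)).
    rewrite <- (Rabs_pos_eq eps) by lra. apply triangle_rectangle_lt. unfold Rsqr. simpl in H0. lra.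
Qed.

Lemma D4pt (f : R -> R) x N u : - PI < u < PI ->
  (f (u + x) - f x) * K N u =
  / 2 * ((G f x u * cos (u / 2)) * sin (INR N * u)) + / 2 * ((f (u + x) - f x) * cos (INR N * u)).
Proof.
  intros Hu. unfold G. destruct (Req_EM_T u 0) as [E|E].
  - subst. rewrite Rplus_0_l, Rmult_0_r, sin_0. fixeq. ring.
  - assert (Hs : sin (u / 2) <> 0) by (apply sin_half_nz; auto; lra).
    pose proof (telescope N u) as T.
    replace ((INR N + / 2) * u) with (INR N * u + u / 2) in T by field.
    rewrite sin_plus in T.
    assert (HK : K N u = (sin (INR N * u) * cos (u / 2) + cos (INR N * u) * sin (u / 2)) / (2 * sin (u / 2))).
    { rewrite <- T. field. auto. }
    rewrite HK. field. auto.
Qed.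

Lemma key_identity (f : R -> R) x N : CA f -> per f -> ex_derive f x ->
  PI * (Sp 0 f N x - f x) =
  / 2 * As (- PI) (fun u => G f x u * cos (u / 2)) N + / 2 * Ac (- PI) (fun u => f (u + x) - f x) N.
Proof.
  intros Hc Hp Hd.
  assert (Hb : - PI + 2 * PI = PI) by ring.
  assert (CF : CA (fun u => f (u + x))).
  { intros y. apply (continuous_comp (fun y => y + x) f). apply cont_plus. apply continuous_id. apply cont_const. apply Hc. }
  assert (CIG : CI (- PI) (fun u => G f x u * cos (u / 2))).
  { intros y Hy. apply cont_mult. apply G_cont; auto. lra.
    apply (ex_derive_continuous (K:=R_AbsRing) (V:=R_NormedModule)). auto_derive. auto. }
  assert (CIF : CI (- PI) (fun u => f (u + x) - f x)).
  { intros y Hy. apply cont_minus. apply CF. apply cont_const. }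
  assert (E1 : ex_RInt (fun u => / 2 * ((G f x u * cos (u / 2)) * sin (INR N * u))) (- PI) PI).
  { apply ex_RInt_scalR. pose proof (exgs _ _ (INR N) CIG) as H. rewrite Hb in H. exact H. }
  assert (E2 : ex_RInt (fun u => / 2 * ((f (u + x) - f x) * cos (INR N * u))) (- PI) PI).
  { apply ex_RInt_scalR. pose proof (exgc _ _ (INR N) CIF) as H. rewrite Hb in H. exact H. }
  assert (E3 : ex_RInt (fun u => f (u + x) * K N u) (- PI) PI).
  { apply ex_RInt_cont. intros y. apply cont_mult. apply CF. apply CA_K. }
  assert (E4 : ex_RInt (K N) (- PI) PI) by (apply ex_RInt_cont; apply CA_K).
  assert (E5 : ex_RInt (fun u => f x * K N u) (- PI) PI) by (apply ex_RInt_scalR; auto).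
  rewrite D1 by auto. rewrite D2 by auto.
  transitivity (RInt (fun u => (f (u + x) - f x) * K N u) (- PI) PI).
  - rewrite (RInt_extR (fun u => (f (u + x) - f x) * K N u) (fun u => f (u + x) * K N u - f x * K N u)) by (intros; ring).
    rewrite RInt_minusR by auto. rewrite RInt_scalR by auto. rewrite D3.
    fixeq. field. pose proof PI_RGT_0. lra.
  - rewrite (RInt_extR _ (fun u => / 2 * ((G f x u * cos (u / 2)) * sin (INR N * u)) + / 2 * ((f (u + x) - f x) * cos (INR N * u)))).
    2: { intros u Hu. apply D4pt. pose proof PI_RGT_0. rewrite Rmin_left, Rmax_right in Hu by lra. lra. }
    rewrite RInt_plusR by auto. rewrite !RInt_scalR.
    + unfold As, Ac. rewrite Hb. reflexivity.
    + pose proof (exgc _ _ (INR N) CIF) as H. rewrite Hb in H. exact H.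
    + pose proof (exgs _ _ (INR N) CIG) as H. rewrite Hb in H. exact H.
Qed.

Theorem pointwise (f : R -> R) x : per f -> (forall y, ex_derive f y) ->
  forall eps, 0 < eps -> exists N0, forall N, (N0 <= N)%nat -> Rabs (Sp 0 f N x - f x) < eps.
Proof.
  intros Hp Hd eps Heps. pose proof PI_RGT_0.
  assert (Hc : CA f) by (intros y; apply (ex_derive_continuous (K:=R_AbsRing) (V:=R_NormedModule)); auto).
  assert (CF : CA (fun u => f (u + x))).
  { intros y. apply (continuous_comp (fun y => y + x) f). apply cont_plus. apply continuous_id. apply cont_const. apply Hc. }
  assert (CIG : CI (- PI) (fun u => G f x u * cos (u / 2))).
  { intros y Hy. apply cont_mult. apply G_cont; auto. lra.
    apply (ex_derive_continuous (K:=R_AbsRing) (V:=R_NormedModule)). auto_derive. auto. }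
  assert (CIF : CI (- PI) (fun u => f (u + x) - f x)).
  { intros y Hy. apply cont_minus. apply CF. apply cont_const. }
  destruct (RL _ _ CIG (eps * PI)) as [N1 H1]. nra.
  destruct (RL _ _ CIF (eps * PI)) as [N2 H2]. nra.
  exists (max N1 N2). intros N HN.
  specialize (H1 N ltac:(lia)). specialize (H2 N ltac:(lia)).
  pose proof (key_identity f x N Hc Hp (Hd x)) as KI.
  assert (Rabs (PI * (Sp 0 f N x - f x)) < eps * PI).
  { rewrite KI. eapply Rle_lt_trans. apply Rabs_triang. rewrite !Rabs_mult.
    rewrite Rabs_pos_eq by lra. lra. }
  rewrite Rabs_mult, (Rabs_pos_eq PI) in H0 by lra. nra.
Qed.

Lemma Rabs_sumR a n f : Rabs (sumR a n f) <= sumR a n (fun k => Rabs (f k)).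
Proof.
  revert a. induction n; intros a.
  - rewrite !sumR_0, Rabs_R0. lra.
  - rewrite !sumR_S. eapply Rle_trans. apply Rabs_triang. specialize (IHn (S a)). lra.
Qed.

Lemma inv_sq_sum N0 d : (1 <= N0)%nat ->
  sumR (S N0) d (fun n => / (INR n ^ 2)) <= / INR N0 - / INR (N0 + d).
Proof.
  intros H. induction d.
  - rewrite sumR_0, Nat.add_0_r. lra.
  - rewrite sumR_Sr. replace (S N0 + d)%nat with (N0 + S d)%nat by lia.
    assert (HA : 1 <= INR (N0 + d)). { replace 1 with (INR 1) by reflexivity. apply le_INR. lia. }
   
    assert (/ (INR (N0 + d) + 1) ^ 2 <= / INR (N0 + d) - / (INR (N0 + d) + 1)).
    { set (q := INR (N0 + d)). unfold q in *.
      replace (/ INR (N0 + d) - / (INR (N0 + d) + 1)) with (/ (INR (N0 + d) * (INR (N0 + d) + 1))) by (field; lra).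
      apply Rinv_le_contravar. apply Rmult_lt_0_compat; lra. simpl. nra. }
    replace (N0 + S d)%nat with (S (N0 + d)) by lia. rewrite S_INR. lra.
Qed.

Definition C1 (f : R -> R) : Prop := (forall x, ex_derive f x) /\ CA (Derive f).

Lemma amgm lam p q : 0 < lam -> 2 * p * q <= lam * p ^ 2 + q ^ 2 / lam.
Proof.
  intros Hl. assert (0 <= (lam * p - q) ^ 2 / lam) by (apply Rdiv_le_0_compat; [apply pow2_ge_0 | auto]).
  replace ((lam * p - q) ^ 2 / lam) with (lam * p ^ 2 + q ^ 2 / lam - 2 * p * q) in H by (field; lra). lra.
Qed.

Lemma term_bound f n lam : per f -> C1 f -> (1 <= n)%nat -> 0 < lam ->
  Rabs (Ac 0 f n) + Rabs (As 0 f n) <=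
  lam / 2 * (Ac 0 (Derive f) n ^ 2 + As 0 (Derive f) n ^ 2) + / (lam * INR n ^ 2).
Proof.
  intros Hp [Hd Hc] Hn Hl.
  destruct (coef_deriv f n Hp Hd Hc) as [E1 E2].
  assert (Hn' : 1 <= INR n) by (replace 1 with (INR 1) by reflexivity; apply le_INR; auto).
  assert (A1 : Rabs (As 0 f n) = Rabs (Ac 0 (Derive f) n) * / INR n).
  { rewrite E1. rewrite Rabs_mult, (Rabs_pos_eq (INR n)) by lra. field. lra. }
  assert (A2 : Rabs (Ac 0 f n) = Rabs (As 0 (Derive f) n) * / INR n).
  { rewrite E2. rewrite Rabs_mult, Rabs_Ropp, (Rabs_pos_eq (INR n)) by lra. field. lra. }
  pose proof (amgm lam (Rabs (Ac 0 (Derive f) n)) (/ INR n) Hl).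
  pose proof (amgm lam (Rabs (As 0 (Derive f) n)) (/ INR n) Hl).
  rewrite <- !Rsqr_pow2, <- !Rsqr_abs, !Rsqr_pow2 in *.
  replace (/ (lam * INR n ^ 2)) with ((/ INR n) ^ 2 / lam) by (field; lra).
  rewrite A1, A2. lra.
Qed.

Lemma Sp_diff_bound f N0 M x lam : per f -> C1 f -> (1 <= N0)%nat -> (N0 <= M)%nat -> 0 < lam ->
  Rabs (Sp 0 f M x - Sp 0 f N0 x) <=
  / PI * (lam / 2 * (PI * RInt (fun t => Derive f t ^ 2) 0 (2 * PI)) + / (lam * INR N0)).
Proof.
  intros Hp HC HN0 HM Hl. pose proof PI_RGT_0.
  set (d := (M - N0)%nat).
  set (g := fun n => w n * Ac 0 f n * cos (INR n * x) + w n * As 0 f n * sin (INR n * x)).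
  assert (Hdiff : Sp 0 f M x - Sp 0 f N0 x = sumR (S N0) d g).
  { unfold Sp, TP. replace (S M) with (S N0 + d)%nat by (unfold d; lia).
    rewrite sumR_split. replace (0 + S N0)%nat with (S N0) by lia. unfold g. ring. }
  rewrite Hdiff.
  set (e' := fun n => Ac 0 (Derive f) n ^ 2 + As 0 (Derive f) n ^ 2).
  assert (Hb1 : sumR (S N0) d (fun n => Rabs (g n)) <=
                sumR (S N0) d (fun n => / PI * (lam / 2 * e' n + / lam * / (INR n ^ 2)))).
  { apply sumR_le. intros n Hn.
    assert (Hw : w n = / PI) by (unfold w; destruct (Nat.eqb_spec n 0); [lia | reflexivity]).
    unfold g. rewrite Hw.
    assert (Hn1 : 1 <= INR n) by (replace 1 with (INR 1) by reflexivity; apply le_INR; lia).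
    pose proof (term_bound f n lam Hp HC ltac:(lia) Hl) as TB.
    replace (/ (lam * INR n ^ 2)) with (/ lam * / (INR n ^ 2)) in TB by (field; lra).
    eapply Rle_trans. apply Rabs_triang. rewrite !Rabs_mult.
    rewrite (Rabs_pos_eq (/ PI)) by (left; apply Rinv_0_lt_compat; lra).
    pose proof (COS_bound (INR n * x)). pose proof (SIN_bound (INR n * x)).
    assert (Rabs (cos (INR n * x)) <= 1) by (apply Rabs_le; lra).
    assert (Rabs (sin (INR n * x)) <= 1) by (apply Rabs_le; lra).
    pose proof (Rabs_pos (Ac 0 f n)). pose proof (Rabs_pos (As 0 f n)).
    assert (0 < / PI) by (apply Rinv_0_lt_compat; lra).
    unfold e'. apply Rmult_le_compat_l with (r := / PI) in TB; [|lra].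
    assert (Rabs (Ac 0 f n) * Rabs (cos (INR n * x)) <= Rabs (Ac 0 f n)) by nra.
    assert (Rabs (As 0 f n) * Rabs (sin (INR n * x)) <= Rabs (As 0 f n)) by nra.
    nra. }
  assert (Hb2 : sumR (S N0) d e' <= PI * RInt (fun t => Derive f t ^ 2) 0 (2 * PI)).
  { destruct HC as [Hd Hc].
    pose proof (bessel 0 (Derive f) (N0 + d) (CI_all 0 _ Hc)) as B.
    rewrite Rplus_0_l in B. unfold En in B.
    replace (S (N0 + d)) with (S N0 + d)%nat in B by lia. rewrite sumR_split in B.
    replace (0 + S N0)%nat with (S N0) in B by lia.
    assert (0 <= sumR 0 (S N0) (fun n => w n * (Ac 0 (Derive f) n ^ 2 + As 0 (Derive f) n ^ 2))).
    { apply sumR_nonneg. intros. apply Rmult_le_pos. unfold w. destruct (Nat.eqb k 0); left; apply Rinv_0_lt_compat; lra.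
      pose proof (pow2_ge_0 (Ac 0 (Derive f) k)). pose proof (pow2_ge_0 (As 0 (Derive f) k)). lra. }
    rewrite (sumR_ext (S N0) d _ (fun n => / PI * e' n)) in B.
    rewrite sumR_scal in B.
    assert (B2 : / PI * sumR (S N0) d e' <= RInt (fun t => Derive f t ^ 2) 0 (2 * PI)) by lra.
    apply Rmult_le_compat_l with (r := PI) in B2; [|lra].
    replace (PI * (/ PI * sumR (S N0) d e')) with (sumR (S N0) d e') in B2 by (field; lra). lra.
    intros n Hn. unfold w, e'. destruct (Nat.eqb_spec n 0); [lia | reflexivity]. }
  assert (Hb3 : sumR (S N0) d (fun n => / (INR n ^ 2)) <= / INR N0).
  { pose proof (inv_sq_sum N0 d HN0).
    assert (0 < INR (N0 + d)) by (apply lt_0_INR; lia).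
    pose proof (Rinv_0_lt_compat _ H1). lra. }
  eapply Rle_trans. apply Rabs_sumR. eapply Rle_trans. apply Hb1.
  rewrite sumR_scal, sumR_plus, sumR_scal, sumR_scal.
  apply Rmult_le_compat_l. left; apply Rinv_0_lt_compat; lra.
  assert (HN0' : INR N0 <> 0) by (apply not_0_INR; lia).
  replace (/ (lam * INR N0)) with (/ lam * / INR N0) by (field; repeat split; first [assumption | lra]).
  assert (0 < / lam) by (apply Rinv_0_lt_compat; lra).
  apply Rplus_le_compat. apply Rmult_le_compat_l; [lra | auto].
  apply Rmult_le_compat_l; [lra | auto].
Qed.

Lemma unif_bound f : per f -> C1 f -> forall delta, 0 < delta ->
  exists N1, forall N, (N1 <= N)%nat -> forall x, Rabs (f x - Sp 0 f N x) <= delta.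
Proof.
  intros Hp HC delta Hdel. pose proof PI_RGT_0.
  set (C := RInt (fun t => Derive f t ^ 2) 0 (2 * PI)).
  assert (HC0 : 0 <= C).
  { unfold C. apply RInt_ge_0. lra. apply ex_RInt_cont. intros y. apply cont_pow. apply HC.
    intros. apply pow2_ge_0. }
  set (lam := delta / (C + 1)).
  assert (Hlam : 0 < lam) by (unfold lam; apply Rdiv_lt_0_compat; lra).
  destruct (INR_archimed (PI * lam * (delta / 2)) 1) as [N1 HN1].
  { apply Rmult_lt_0_compat. apply Rmult_lt_0_compat; lra. lra. }
  exists (max N1 1). intros N HN x.
  assert (HN1' : 1 <= INR N) by (replace 1 with (INR 1) by reflexivity; apply le_INR; lia).
  assert (HNN : INR N1 <= INR N) by (apply le_INR; lia).
  assert (Hbd : forall M, (N <= M)%nat -> Rabs (Sp 0 f M x - Sp 0 f N x) <= delta).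
  { intros M HM. eapply Rle_trans. apply (Sp_diff_bound f N M x lam); auto. lia.
    fold C.
    assert (A1 : / PI * (lam / 2 * (PI * C)) <= delta / 2).
    { replace (/ PI * (lam / 2 * (PI * C))) with (lam * C / 2) by (field; lra).
      unfold lam. apply Rmult_le_compat_r. lra.
      replace (delta / (C + 1) * C) with (delta * (C / (C + 1))) by (field; lra).
      assert (C / (C + 1) <= 1).
      { apply (Rmult_le_reg_r (C+1)); [lra|]. unfold Rdiv. rewrite Rmult_assoc, Rinv_l by lra. lra. }
      assert (0 <= C / (C + 1)) by (apply Rdiv_le_0_compat; lra).
      nra. }
    assert (A2 : / PI * / (lam * INR N) <= delta / 2).
    { replace (/ PI * / (lam * INR N)) with (/ (PI * lam * INR N)) by (field; repeat split; lra).
      assert (0 < PI * lam * INR N) by (apply Rmult_lt_0_compat; [apply Rmult_lt_0_compat|]; lra).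
      apply (Rmult_le_reg_l (PI * lam * INR N)); auto. rewrite Rinv_r by lra.
      assert (INR N1 * (PI * lam * (delta / 2)) <= INR N * (PI * lam * (delta / 2))).
      { apply Rmult_le_compat_r; auto. left. apply Rmult_lt_0_compat. apply Rmult_lt_0_compat; lra. lra. }
      replace (PI * lam * INR N * (delta / 2)) with (INR N * (PI * lam * (delta / 2))) by ring. lra. }
    rewrite Rmult_plus_distr_l. lra. }
  apply Rnot_lt_le. intros Hlt.
  set (eta := Rabs (f x - Sp 0 f N x) - delta).
  destruct (pointwise f x Hp (proj1 HC) eta ltac:(unfold eta; lra)) as [M0 HM0].
  specialize (HM0 (max M0 N) ltac:(lia)). specialize (Hbd (max M0 N) ltac:(lia)).
  assert (Rabs (f x - Sp 0 f N x) <= Rabs (Sp 0 f (max M0 N) x - f x) + Rabs (Sp 0 f (max M0 N) x - Sp 0 f N x)).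
  { replace (f x - Sp 0 f N x) with (- (Sp 0 f (max M0 N) x - f x) + (Sp 0 f (max M0 N) x - Sp 0 f N x)) by ring.
    eapply Rle_trans. apply Rabs_triang. rewrite Rabs_Ropp. lra. }
  unfold eta in HM0. lra.
Qed.

Lemma parseval f : per f -> C1 f -> forall eps, 0 < eps ->
  exists N1, forall N, (N1 <= N)%nat -> RInt (fun t => f t ^ 2) 0 (2 * PI) - En 0 f N <= eps.
Proof.
  intros Hp HC eps Heps. pose proof PI_RGT_0.
  set (delta := Rmin 1 (eps / (2 * PI))).
  assert (Hd0 : 0 < delta) by (apply Rmin_pos; [lra | apply Rdiv_lt_0_compat; lra]).
  assert (Hd1 : delta <= 1) by apply Rmin_l.
  assert (Hd2 : delta <= eps / (2 * PI)) by apply Rmin_r.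
  destruct (unif_bound f Hp HC delta Hd0) as [N1 HN1].
  exists N1. intros N HN.
  assert (Cf : CA f) by (intros y; apply (ex_derive_continuous (K:=R_AbsRing) (V:=R_NormedModule)); apply HC).
  pose proof (bessel_id 0 f N (CI_all 0 f Cf)) as B. rewrite Rplus_0_l in B.
  rewrite <- B.
  assert (RInt (fun t => (f t - Sp 0 f N t) ^ 2) 0 (2 * PI) <= RInt (fun _ => delta ^ 2) 0 (2 * PI)).
  { apply RInt_le. lra.
    - pose proof (exI (fun t => (f t - Sp 0 f N t) ^ 2) 0) as E. rewrite Rplus_0_l in E. apply E.
      intros y Hy. apply cont_pow. apply cont_minus. apply Cf. exact (CI_TP 0 _ _ N y Hy).
    - apply ex_RInt_const.
    - intros y _. specialize (HN1 N HN y). rewrite <- (pow2_abs (f y - Sp 0 f N y)).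
      apply pow_incr. split; [apply Rabs_pos | auto]. }
  rewrite RInt_constR in H0.
  assert (delta ^ 2 <= delta) by (simpl; nra).
  assert (2 * PI * delta <= eps).
  { apply (Rmult_le_compat_l (2 * PI)) in Hd2; [|lra]. replace (2 * PI * (eps / (2 * PI))) with eps in Hd2 by (field; lra). lra. }
  nra.
Qed.

Lemma Pm_S k t : (1 <= k)%nat -> Pm (S k) t = Pm k t * (t - INR (S k) ^ 2).
Proof. intros H. destruct k. lia. reflexivity. Qed.
Lemma Pm_1 t : Pm 1 t = 1.
Proof. reflexivity. Qed.

Lemma Pm_zero m n : (2 <= n <= m)%nat -> Pm m (INR n ^ 2) = 0.
Proof.
  induction m; intros H. lia.
  rewrite Pm_S by lia. destruct (Nat.eq_dec n (S m)).
  - subst. ring.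
  - rewrite IHm by lia. ring.
Qed.

Lemma Pm_pos m n : (1 <= m)%nat -> (m < n)%nat -> 0 < Pm m (INR n ^ 2).
Proof.
  induction m; intros H1 H2. lia.
  destruct m. rewrite Pm_1. lra.
  rewrite Pm_S by lia. apply Rmult_lt_0_compat. apply IHm; lia.
  assert (INR (S (S m)) < INR n) by (apply lt_INR; lia).
  assert (0 <= INR (S (S m))) by apply pos_INR. nra.
Qed.

Lemma Pm_at1_aux p : Pm (p + 2) 1 = (-1) ^ (p + 1) * INR (fact (p + 1)) * INR (fact (p + 3)) / 2.
Proof.
  induction p.
  - simpl. lra.
  - replace (S p + 2)%nat with (S (p + 2)) by lia. rewrite Pm_S by lia. rewrite IHp.
    replace (S p + 1)%nat with (S (p + 1)) by lia. replace (S p + 3)%nat with (S (p + 3)) by lia.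
    rewrite (fact_simpl (p + 1)), (fact_simpl (p + 3)), !mult_INR.
    rewrite !S_INR, !plus_INR. simpl pow. simpl INR. field.
Qed.
Lemma Pm_at1 m : (2 <= m)%nat -> Pm m 1 = (-1) ^ (m - 1) * INR (fact (m - 1)) * INR (fact (m + 1)) / 2.
Proof.
  intros H. replace m with ((m - 2) + 2)%nat at 1 by lia. rewrite Pm_at1_aux.
  replace (m - 2 + 1)%nat with (m - 1)%nat by lia. replace (m - 2 + 3)%nat with (m + 1)%nat by lia. reflexivity.
Qed.

Lemma Pm_at0 m : (1 <= m)%nat -> Pm m 0 = (-1) ^ (m - 1) * INR (fact m) ^ 2.
Proof.
  induction m; intros H. lia.
  destruct (Nat.eq_dec m 0).
  - subst. simpl. lra.
  - rewrite Pm_S by lia. rewrite IHm by lia.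
    replace (S m - 1)%nat with (S (m - 1)) by lia. rewrite fact_simpl, mult_INR.
    simpl pow. ring.
Qed.

Fixpoint Pr (m : nat) (u : R) : R :=
  match m with
  | O => 1
  | S m' => match m' with
            | O => 1
            | S _ => Pr m' u * (1 - INR m ^ 2 * u)
            end
  end.
Lemma Pr_S k u : (1 <= k)%nat -> Pr (S k) u = Pr k u * (1 - INR (S k) ^ 2 * u).
Proof. intros H. destruct k. lia. reflexivity. Qed.

Lemma Pr_inv m u : (1 <= m)%nat -> u <> 0 -> u ^ (m - 1) * Pm m (/ u) = Pr m u.
Proof.
  intros Hm Hu. induction m. lia.
  destruct m. simpl. ring.
  rewrite Pm_S, Pr_S by lia. rewrite <- IHm by lia.
  replace (S (S m) - 1)%nat with (S (S m - 1)) by lia. simpl pow. field. auto.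
Qed.

Lemma Pr_0 m : Pr m 0 = 1.
Proof. induction m. reflexivity. destruct m. reflexivity. rewrite Pr_S by lia. rewrite IHm. ring. Qed.

Lemma Pr_cont m x : continuous (Pr m) x.
Proof.
  induction m. apply cont_const. destruct m. apply cont_const.
  apply (continuous_ext (fun u => Pr (S m) u * (1 - INR (S (S m)) ^ 2 * u))).
  intros; symmetry; apply Pr_S; lia.
  apply cont_mult. auto. apply cont_minus. apply cont_const. apply cont_mult. apply cont_const. apply continuous_id.
Qed.

Lemma cont_agree (A B : R -> R) : continuous A 0 -> continuous B 0 -> (forall u, u <> 0 -> A u = B u) -> A 0 = B 0.
Proof.
  intros HA HB HE. apply continuity_pt_filterlim in HA. apply continuity_pt_filterlim in HB.
  destruct (Req_dec (A 0) (B 0)) as [E|E]; auto. exfalso.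
  set (eps := Rabs (A 0 - B 0) / 2).
  assert (Heps : eps > 0) by (unfold eps; apply Rdiv_lt_0_compat; [apply Rabs_pos_lt; lra | lra]).
  destruct (HA eps Heps) as [d1 [Hd1 H1]]. destruct (HB eps Heps) as [d2 [Hd2 H2]].
  set (u := Rmin d1 d2 / 2).
  assert (Hu : 0 < u) by (unfold u; apply Rdiv_lt_0_compat; [apply Rmin_pos; lra | lra]).
  assert (Hu1 : u < d1) by (unfold u; pose proof (Rmin_l d1 d2); lra).
  assert (Hu2 : u < d2) by (unfold u; pose proof (Rmin_r d1 d2); lra).
  assert (D : D_x no_cond 0 u /\ R_dist u 0 < d1).
  { split. split. constructor. lra. unfold R_dist. rewrite Rminus_0_r, Rabs_pos_eq; lra. }
  assert (D' : D_x no_cond 0 u /\ R_dist u 0 < d2).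
  { split. split. constructor. lra. unfold R_dist. rewrite Rminus_0_r, Rabs_pos_eq; lra. }
  specialize (H1 u D). specialize (H2 u D'). simpl in H1, H2. unfold R_dist in H1, H2.
  rewrite HE in H1 by lra.
  assert (Rabs (A 0 - B 0) <= Rabs (B u - A 0) + Rabs (B u - B 0)).
  { replace (A 0 - B 0) with (- (B u - A 0) + (B u - B 0)) by ring.
    eapply Rle_trans. apply Rabs_triang. rewrite Rabs_Ropp. lra. }
  unfold eps in *. lra.
Qed.

Lemma S_top (m : nat) (Sc : nat -> R) : (2 <= m)%nat ->
  (forall t, (t - 1) * sumR 1 (m - 1) (fun k => Sc k * t ^ (k - 1)) = Pm m t - Pm m 1) ->
  Sc (m - 1)%nat = 1.
Proof.
  intros Hm HS.
  set (A := fun u => (1 - u) * sumR 1 (m - 1) (fun k => Sc k * u ^ (m - 1 - k))).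
  set (B := fun u => Pr m u - Pm m 1 * u ^ (m - 1)).
  assert (HAB : A 0 = B 0).
  { apply cont_agree.
    - unfold A. apply cont_mult. apply cont_minus. apply cont_const. apply continuous_id.
      apply cont_sumR. intros k. apply cont_mult. apply cont_const. apply cont_pow. apply continuous_id.
    - unfold B. apply cont_minus. apply Pr_cont. apply cont_mult. apply cont_const. apply cont_pow. apply continuous_id.
    - intros u Hu. unfold A, B. rewrite <- Pr_inv by (auto; lia).
      replace (u ^ (m - 1) * Pm m (/ u) - Pm m 1 * u ^ (m - 1)) with (u ^ (m - 1) * (Pm m (/ u) - Pm m 1)) by ring.
      rewrite <- HS. rewrite <- Rmult_assoc. rewrite <- !sumR_scal. apply sumR_ext. intros k Hk.
      replace (m - 1)%nat with ((m - 1 - k) + (k - 1) + 1)%nat at 2 by lia.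
      rewrite !pow_add, pow_inv. field. split. apply pow_nonzero; auto. auto. }
  unfold A, B in HAB. rewrite Pr_0 in HAB.
  replace (m - 1)%nat with (S (m - 2)) in HAB at 1 by lia.
  rewrite sumR_Sr in HAB.
  rewrite (sumR_ext 1 (m - 2) _ (fun _ => 0)) in HAB.
  - rewrite sumR_const0 in HAB. replace (1 + (m - 2))%nat with (m - 1)%nat in HAB by lia.
    rewrite Nat.sub_diag, pow_O in HAB. rewrite pow_i in HAB by lia. lra.
  - intros k Hk. rewrite pow_i by lia. ring.
Qed.

Lemma is_derive_sumR i n (F dF : nat -> R -> R) x :
  (forall k, is_derive (F k) x (dF k x)) ->
  is_derive (fun t => sumR i n (fun k => F k t)) x (sumR i n (fun k => dF k x)).
Proof.
  intros H. revert i. induction n; intros i.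
  - rewrite sumR_0. apply (is_derive_ext (fun _ => 0)). intros; rewrite sumR_0; reflexivity.
    apply (is_derive_const (K:=R_AbsRing) (V:=R_NormedModule)).
  - rewrite sumR_S. apply (is_derive_ext (fun t => F i t + sumR (S i) n (fun k => F k t))).
    intros; rewrite sumR_S; reflexivity.
    apply (is_derive_plus (K:=R_AbsRing) (V:=R_NormedModule)); auto.
Qed.

Definition dal (al be : nat -> R) := fun n => INR n * be n.
Definition dbe (al be : nat -> R) := fun n => - INR n * al n.

Lemma TP_is_derive al be N x : is_derive (TP al be N) x (TP (dal al be) (dbe al be) N x).
Proof.
  unfold TP. apply (is_derive_sumR 0 (S N) (fun n t => al n * cos (INR n * t) + be n * sin (INR n * t))
     (fun n t => dal al be n * cos (INR n * t) + dbe al be n * sin (INR n * t))).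
  intros k. auto_derive. auto. unfold dal, dbe. ring.
Qed.

Lemma TP_Derive al be N x : Derive (TP al be N) x = TP (dal al be) (dbe al be) N x.
Proof. apply is_derive_unique. apply TP_is_derive. Qed.

Lemma TP_Derive_n al be N j : exists al' be', forall x, Derive_n (TP al be N) j x = TP al' be' N x.
Proof.
  induction j.
  - exists al, be. intros; reflexivity.
  - destruct IHj as [a1 [b1 H]]. exists (dal a1 b1), (dbe a1 b1). intros x. simpl.
    rewrite (Derive_ext _ (TP a1 b1 N)) by auto. apply TP_Derive.
Qed.

Lemma CA_TP al be N : CA (TP al be N).
Proof. intros x. exact (CI_TP 0 al be N x (conj (Rle_refl 0) ltac:(pose proof PI_RGT_0; lra))) || idtac.
  unfold TP. apply cont_sumR. intros. apply cont_plus; apply cont_mult; try apply cont_const; [apply cont_cos | apply cont_sin].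
Qed.

Lemma per_TP al be N : per (TP al be N).
Proof.
  intros t. unfold TP. apply sumR_ext. intros k _.
  replace (INR k * (t + 2 * PI)) with (INR k * t + 2 * INR k * PI) by ring.
  rewrite cos_period, sin_period. reflexivity.
Qed.

Lemma C1_TP al be N : C1 (TP al be N).
Proof.
  split. intros x. eexists. apply TP_is_derive.
  intros x. apply (continuous_ext (TP (dal al be) (dbe al be) N)). intros; symmetry; apply TP_Derive.
  apply CA_TP.
Qed.

Lemma C1_ext f g : (forall x, f x = g x) -> C1 f -> C1 g.
Proof.
  intros E [H1 H2]. split.
  - intros x. apply (ex_derive_ext f); auto.
  - intros x. apply (continuous_ext (Derive f)). intros; apply Derive_ext; auto. apply H2.
Qed.

Lemma C1_plus f g : C1 f -> C1 g -> C1 (fun t => f t + g t).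
Proof.
  intros [Hf1 Hf2] [Hg1 Hg2]. split.
  - intros x. apply (ex_derive_plus (K:=R_AbsRing) (V:=R_NormedModule)); auto.
  - intros x. apply (continuous_ext (fun t => Derive f t + Derive g t)).
    intros; symmetry; apply Derive_plus; auto.
    apply cont_plus; auto.
Qed.

Lemma per_plus f g : per f -> per g -> per (fun t => f t + g t).
Proof. intros Hf Hg t. rewrite Hf, Hg. reflexivity. Qed.

Lemma C1_CA f : C1 f -> CA f.
Proof. intros [H _] x. apply (ex_derive_continuous (K:=R_AbsRing) (V:=R_NormedModule)). auto. Qed.

Definition Van (u : nat -> R) : Prop := forall eps, 0 < eps -> exists N0, forall N, (N0 <= N)%nat -> Rabs (u N) <= eps.

Lemma Van_plus u v : Van u -> Van v -> Van (fun N => u N + v N).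
Proof.
  intros Hu Hv eps He. destruct (Hu (eps/2) ltac:(lra)) as [N1 H1]. destruct (Hv (eps/2) ltac:(lra)) as [N2 H2].
  exists (max N1 N2). intros N HN. specialize (H1 N ltac:(lia)). specialize (H2 N ltac:(lia)).
  eapply Rle_trans. apply Rabs_triang. lra.
Qed.
Lemma Van_scal c u : Van u -> Van (fun N => c * u N).
Proof.
  intros Hu eps He. destruct (Hu (eps / (Rabs c + 1))) as [N1 H1].
  apply Rdiv_lt_0_compat; auto. pose proof (Rabs_pos c). lra.
  exists N1. intros N HN. specialize (H1 N HN). rewrite Rabs_mult.
  pose proof (Rabs_pos c). pose proof (Rabs_pos (u N)).
  apply Rmult_le_compat_l with (r := Rabs c + 1) in H1; [|lra].
  replace ((Rabs c + 1) * (eps / (Rabs c + 1))) with eps in H1 by (field; lra). nra.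
Qed.
Lemma Van_0 : Van (fun _ => 0).
Proof. intros eps He. exists 0%nat. intros. rewrite Rabs_R0. lra. Qed.
Lemma Van_sumR a n (F : nat -> nat -> R) : (forall k, (a <= k < a + n)%nat -> Van (F k)) ->
  Van (fun N => sumR a n (fun k => F k N)).
Proof.
  revert a. induction n; intros a H.
  - intros eps He. exists 0%nat. intros. rewrite sumR_0, Rabs_R0. lra.
  - apply (Van_plus (F a) (fun N => sumR (S a) n (fun k => F k N))).
    apply H; lia. apply IHn. intros; apply H; lia.
Qed.

Lemma Van_parseval f : per f -> C1 f -> Van (fun N => RInt (fun t => f t ^ 2) 0 (2 * PI) - En 0 f N).
Proof.
  intros Hp HC eps He. destruct (parseval f Hp HC eps He) as [N1 H1]. exists N1. intros N HN.
  pose proof (bessel 0 f N (CI_all 0 f (C1_CA f HC))). rewrite Rplus_0_l in H.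
  specialize (H1 N HN). rewrite Rabs_pos_eq; lra.
Qed.

Definition ecoef (f : R -> R) (n : nat) : R := Ac 0 f n ^ 2 + As 0 f n ^ 2.
Definition Rm (f : R -> R) (N : nat) : R := RInt (fun t => f t ^ 2) 0 (2 * PI) - En 0 f N.
Definition gk (h : R -> R) (k : nat) : R -> R := fun t => Derive_n h (k + 1) t + Derive_n h (k - 1) t.

Lemma CA_D m h : Cm m h -> forall j, (j <= m)%nat -> CA (Derive_n h j).
Proof.
  intros [H1 H2] j Hj. destruct (Nat.eq_dec j m). subst. exact H2.
  intros x. apply (ex_derive_continuous (K:=R_AbsRing) (V:=R_NormedModule)). apply H1. lia.
Qed.

Lemma C1_D m h : Cm m h -> forall j, (j < m)%nat -> C1 (Derive_n h j).
Proof.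
  intros HC j Hj. split. intros x. apply HC; auto.
  intros x. exact (CA_D m h HC (S j) Hj x).
Qed.

Lemma coefD m h : per h -> Cm m h -> forall j, (j < m)%nat -> forall n,
  Ac 0 (Derive_n h (S j)) n = INR n * As 0 (Derive_n h j) n /\
  As 0 (Derive_n h (S j)) n = - INR n * Ac 0 (Derive_n h j) n.
Proof.
  intros Hp HC j Hj n. destruct (C1_D m h HC j Hj) as [Hd Hc].
  exact (coef_deriv (Derive_n h j) n (per_Derive_n h j Hp) Hd Hc).
Qed.

Lemma eD m h : per h -> Cm m h -> forall j, (j <= m)%nat -> forall n,
  ecoef (Derive_n h j) n = (INR n ^ 2) ^ j * ecoef h n.
Proof.
  intros Hp HC j. induction j; intros Hj n.
  - simpl. unfold ecoef, Ac, As. ring.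
  - destruct (coefD m h Hp HC j ltac:(lia) n) as [E1 E2].
    unfold ecoef in *. rewrite E1, E2. specialize (IHj ltac:(lia) n).
    replace ((INR n * As 0 (Derive_n h j) n) ^ 2 + (- INR n * Ac 0 (Derive_n h j) n) ^ 2)
      with (INR n ^ 2 * (Ac 0 (Derive_n h j) n ^ 2 + As 0 (Derive_n h j) n ^ 2)) by ring.
    rewrite IHj. simpl. ring.
Qed.

Lemma Ac_plus f g n : CA f -> CA g -> Ac 0 (fun t => f t + g t) n = Ac 0 f n + Ac 0 g n.
Proof.
  intros Hf Hg. unfold Ac. rewrite (RInt_extR _ (fun t => f t * cos (INR n * t) + g t * cos (INR n * t))) by (intros; ring).
  apply RInt_plusR; apply exgc; apply CI_all; auto.
Qed.
Lemma As_plus f g n : CA f -> CA g -> As 0 (fun t => f t + g t) n = As 0 f n + As 0 g n.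
Proof.
  intros Hf Hg. unfold As. rewrite (RInt_extR _ (fun t => f t * sin (INR n * t) + g t * sin (INR n * t))) by (intros; ring).
  apply RInt_plusR; apply exgs; apply CI_all; auto.
Qed.

Lemma eg m h : per h -> Cm m h -> forall k, (1 <= k)%nat -> (k + 1 <= m)%nat -> forall n,
  ecoef (gk h k) n = (1 - INR n ^ 2) ^ 2 * (INR n ^ 2) ^ (k - 1) * ecoef h n.
Proof.
  intros Hp HC k Hk1 Hk2 n.
  unfold gk, ecoef. rewrite Ac_plus, As_plus by (apply CA_D with m; auto; lia).
  replace (k + 1)%nat with (S (S (k - 1))) by lia.
  destruct (coefD m h Hp HC (S (k - 1)) ltac:(lia) n) as [E1 E2].
  destruct (coefD m h Hp HC (k - 1) ltac:(lia) n) as [E3 E4].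
  rewrite E1, E2, E3, E4.
  pose proof (eD m h Hp HC (k - 1) ltac:(lia) n) as E. unfold ecoef in E.
  replace ((INR n * (- INR n * Ac 0 (Derive_n h (k - 1)) n) + Ac 0 (Derive_n h (k - 1)) n) ^ 2 +
           (- INR n * (INR n * As 0 (Derive_n h (k - 1)) n) + As 0 (Derive_n h (k - 1)) n) ^ 2)
    with ((1 - INR n ^ 2) ^ 2 * (Ac 0 (Derive_n h (k - 1)) n ^ 2 + As 0 (Derive_n h (k - 1)) n ^ 2)) by ring.
  rewrite E. ring.
Qed.

Definition Qdef (m : nat) (h : R -> R) (S : nat -> R) : R :=
    (-1) ^ m / 2 * INR (fact (m - 1)) * INR (fact (m + 1))
      * RInt (fun t => h t ^ 2 - Derive h t ^ 2) 0 (2 * PI)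
    + (-1) ^ (m - 1) * (INR (fact m)) ^ 2 / (2 * PI) * (RInt h 0 (2 * PI)) ^ 2
    + sumR 1 (m - 1) (fun k => S k *
        RInt (fun t => (Derive_n h (k + 1) t + Derive_n h (k - 1) t) ^ 2) 0 (2 * PI)).

Definition alpha (m : nat) : R := (-1) ^ m / 2 * INR (fact (m - 1)) * INR (fact (m + 1)).
Definition beta (m : nat) : R := (-1) ^ (m - 1) * (INR (fact m)) ^ 2 / (2 * PI).
Definition qf (m : nat) (Sc : nat -> R) (n : nat) : R :=
  alpha m * (1 - INR n ^ 2) + sumR 1 (m - 1) (fun k => Sc k * ((1 - INR n ^ 2) ^ 2 * (INR n ^ 2) ^ (k - 1)))
  + (if Nat.eqb n 0 then 2 * PI * beta m else 0).

Lemma decomp m h Sc N : (2 <= m)%nat -> per h -> Cm m h ->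
  Qdef m h Sc = sumR 0 (S N) (fun n => w n * ecoef h n * qf m Sc n)
    + (alpha m * (Rm h N - Rm (Derive_n h 1) N) + sumR 1 (m - 1) (fun k => Sc k * Rm (gk h k) N)).
Proof.
  intros Hm Hp HC. pose proof PI_RGT_0.
  assert (C0 : CA h) by exact (CA_D m h HC 0 ltac:(lia)).
  assert (C1' : CA (Derive_n h 1)) by exact (CA_D m h HC 1 ltac:(lia)).
  assert (Hsq : forall f, CA f -> ex_RInt (fun t => f t ^ 2) 0 (2 * PI)).
  { intros f Hf. apply ex_RInt_cont. intros x. apply cont_pow. apply Hf. }
  unfold Qdef.
  rewrite (RInt_extR (fun t => h t ^ 2 - Derive h t ^ 2) (fun t => h t ^ 2 - Derive_n h 1 t ^ 2)) by (intros; reflexivity).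
  rewrite RInt_minusR by (apply Hsq; auto).
  assert (Hh0 : RInt h 0 (2 * PI) = Ac 0 h 0).
  { unfold Ac. rewrite Rplus_0_l. apply RInt_extR. intros. simpl. rewrite Rmult_0_l, cos_0. ring. }
  rewrite Hh0.
  assert (EnH : En 0 h N = sumR 0 (S N) (fun n => w n * ecoef h n)) by reflexivity.
  assert (EnD : En 0 (Derive_n h 1) N = sumR 0 (S N) (fun n => w n * (INR n ^ 2 * ecoef h n))).
  { unfold En. apply sumR_ext. intros n _. pose proof (eD m h Hp HC 1 ltac:(lia) n) as E.
    unfold ecoef in E. rewrite E. unfold ecoef. ring. }
  assert (EnG : forall k, (1 <= k < 1 + (m - 1))%nat ->
     RInt (fun t => (Derive_n h (k + 1) t + Derive_n h (k - 1) t) ^ 2) 0 (2 * PI) =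
     sumR 0 (S N) (fun n => w n * ((1 - INR n ^ 2) ^ 2 * (INR n ^ 2) ^ (k - 1) * ecoef h n)) + Rm (gk h k) N).
  { intros k Hk. unfold Rm, En. unfold gk at 2.
    rewrite (sumR_ext 0 (S N) (fun n => w n * ((1 - INR n ^ 2) ^ 2 * (INR n ^ 2) ^ (k - 1) * ecoef h n))
                          (fun n => w n * (Ac 0 (gk h k) n ^ 2 + As 0 (gk h k) n ^ 2))).
    - unfold gk. symmetry. apply Rplus_minus.
    - intros n _. pose proof (eg m h Hp HC k ltac:(lia) ltac:(lia) n) as E. unfold ecoef in E at 1. rewrite E. reflexivity. }
  rewrite (sumR_ext 1 (m - 1) _ (fun k => Sc k * (sumR 0 (S N) (fun n => w n * ((1 - INR n ^ 2) ^ 2 * (INR n ^ 2) ^ (k - 1) * ecoef h n)) + Rm (gk h k) N)))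
    by (intros k Hk; rewrite EnG by lia; reflexivity).
  assert (TB : sumR 1 (m - 1) (fun k => Sc k * (sumR 0 (S N) (fun n => w n * ((1 - INR n ^ 2) ^ 2 * (INR n ^ 2) ^ (k - 1) * ecoef h n)) + Rm (gk h k) N))
     = sumR 0 (S N) (fun n => w n * ecoef h n * sumR 1 (m - 1) (fun k => Sc k * ((1 - INR n ^ 2) ^ 2 * (INR n ^ 2) ^ (k - 1))))
       + sumR 1 (m - 1) (fun k => Sc k * Rm (gk h k) N)).
  { rewrite (sumR_ext 1 (m - 1) _ (fun k => Sc k * sumR 0 (S N) (fun n => w n * ((1 - INR n ^ 2) ^ 2 * (INR n ^ 2) ^ (k - 1) * ecoef h n)) + Sc k * Rm (gk h k) N)) by (intros; ring).
    rewrite sumR_plus. f_equal.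
    rewrite (sumR_ext 1 (m - 1) _ (fun k => sumR 0 (S N) (fun n => Sc k * (w n * ((1 - INR n ^ 2) ^ 2 * (INR n ^ 2) ^ (k - 1) * ecoef h n)))))
      by (intros; rewrite <- sumR_scal; reflexivity).
    rewrite sumR_swap. apply sumR_ext. intros n _. rewrite <- sumR_scal. apply sumR_ext. intros; ring. }
  rewrite TB.
  assert (TC : (-1) ^ (m - 1) * (INR (fact m)) ^ 2 / (2 * PI) * Ac 0 h 0 ^ 2 =
               sumR 0 (S N) (fun n => if Nat.eqb n 0 then w n * ecoef h n * (2 * PI * beta m) else 0)).
  { rewrite sumR_delta. simpl. unfold ecoef, w, beta. simpl. rewrite As_0. field. lra. }
  rewrite TC.
  replace (RInt (fun t => h t ^ 2) 0 (2 * PI)) with (En 0 h N + Rm h N) by (unfold Rm; ring).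
  replace (RInt (fun t => Derive_n h 1 t ^ 2) 0 (2 * PI)) with (En 0 (Derive_n h 1) N + Rm (Derive_n h 1) N) by (unfold Rm; ring).
  rewrite EnH, EnD.
  unfold qf.
  rewrite (sumR_ext 0 (S N) (fun n => w n * ecoef h n * (alpha m * (1 - INR n ^ 2) + sumR 1 (m - 1) (fun k => Sc k * ((1 - INR n ^ 2) ^ 2 * (INR n ^ 2) ^ (k - 1))) + (if Nat.eqb n 0 then 2 * PI * beta m else 0)))
     (fun n => alpha m * (w n * ecoef h n - w n * (INR n ^ 2 * ecoef h n)) + w n * ecoef h n * sumR 1 (m - 1) (fun k => Sc k * ((1 - INR n ^ 2) ^ 2 * (INR n ^ 2) ^ (k - 1))) + (if Nat.eqb n 0 then w n * ecoef h n * (2 * PI * beta m) else 0)))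
     by (intros n _; destruct (Nat.eqb n 0); ring).
  rewrite !sumR_plus, sumR_scal, sumR_minus.
  unfold alpha. ring.
Qed.

Lemma neg1_pow m : (1 <= m)%nat -> (-1) ^ m = - (-1) ^ (m - 1).
Proof. intros H. replace m with (S (m - 1)) at 1 by lia. simpl. ring. Qed.

Lemma qf_eval m Sc n : (2 <= m)%nat ->
  (forall t, (t - 1) * sumR 1 (m - 1) (fun k => Sc k * t ^ (k - 1)) = Pm m t - Pm m 1) ->
  qf m Sc n = (INR n ^ 2 - 1) * Pm m (INR n ^ 2) + (if Nat.eqb n 0 then 2 * PI * beta m else 0).
Proof.
  intros Hm HS. unfold qf.
  set (x := INR n ^ 2).
  rewrite (sumR_ext 1 (m - 1) _ (fun k => (1 - x) ^ 2 * (Sc k * x ^ (k - 1)))) by (intros; ring).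
  rewrite sumR_scal.
  replace ((1 - x) ^ 2 * sumR 1 (m - 1) (fun k => Sc k * x ^ (k - 1)))
    with ((x - 1) * ((x - 1) * sumR 1 (m - 1) (fun k => Sc k * x ^ (k - 1)))) by ring.
  rewrite HS.
  assert (alpha m = - Pm m 1).
  { unfold alpha. rewrite Pm_at1 by auto. rewrite neg1_pow by lia. field. }
  rewrite H. ring.
Qed.

Lemma qf_zero m Sc n : (2 <= m)%nat ->
  (forall t, (t - 1) * sumR 1 (m - 1) (fun k => Sc k * t ^ (k - 1)) = Pm m t - Pm m 1) ->
  (n <= m)%nat -> qf m Sc n = 0.
Proof.
  intros Hm HS Hn. rewrite qf_eval by auto. pose proof PI_RGT_0.
  destruct (Nat.eqb_spec n 0).
  - subst. simpl. rewrite Rmult_0_l. rewrite Pm_at0 by lia. unfold beta. field. lra.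
  - destruct (Nat.eq_dec n 1).
    + subst. simpl. ring.
    + rewrite Pm_zero by lia. ring.
Qed.

Lemma qf_pos m Sc n : (2 <= m)%nat ->
  (forall t, (t - 1) * sumR 1 (m - 1) (fun k => Sc k * t ^ (k - 1)) = Pm m t - Pm m 1) ->
  (m < n)%nat -> 0 < qf m Sc n.
Proof.
  intros Hm HS Hn. rewrite qf_eval by auto.
  destruct (Nat.eqb_spec n 0). lia. rewrite Rplus_0_r.
  apply Rmult_lt_0_compat.
  - assert (INR 2 <= INR n) by (apply le_INR; lia). simpl in H. nra.
  - apply Pm_pos; lia.
Qed.

Lemma sumR_ge_term a n f j : (forall k, (a <= k < a + n)%nat -> 0 <= f k) -> (a <= j < a + n)%nat -> f j <= sumR a n f.
Proof.
  revert a. induction n; intros a H Hj. lia.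
  rewrite sumR_S. destruct (Nat.eq_dec j a).
  - subst. assert (0 <= sumR (S a) n f) by (apply sumR_nonneg; intros; apply H; lia). lra.
  - assert (f j <= sumR (S a) n f) by (apply IHn; [intros; apply H; lia | lia]).
    assert (0 <= f a) by (apply H; lia). lra.
Qed.

Lemma w_pos n : 0 < w n.
Proof. unfold w. pose proof PI_RGT_0. destruct (Nat.eqb n 0); apply Rinv_0_lt_compat; lra. Qed.
Lemma ecoef_nonneg f n : 0 <= ecoef f n.
Proof. unfold ecoef. pose proof (pow2_ge_0 (Ac 0 f n)). pose proof (pow2_ge_0 (As 0 f n)). lra. Qed.

Lemma term_nonneg m Sc h n : (2 <= m)%nat ->
  (forall t, (t - 1) * sumR 1 (m - 1) (fun k => Sc k * t ^ (k - 1)) = Pm m t - Pm m 1) ->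
  0 <= w n * ecoef h n * qf m Sc n.
Proof.
  intros Hm HS. apply Rmult_le_pos. apply Rmult_le_pos. left; apply w_pos. apply ecoef_nonneg.
  destruct (le_lt_dec n m). rewrite qf_zero by auto. lra. left. apply qf_pos; auto.
Qed.

Lemma main_decomp m h Sc : (2 <= m)%nat -> per h -> Cm m h ->
  (forall t, (t - 1) * sumR 1 (m - 1) (fun k => Sc k * t ^ (k - 1)) = Pm m t - Pm m 1) ->
  exists Rest : nat -> R, Van Rest /\ forall N,
    Qdef m h Sc = sumR 0 (S N) (fun n => w n * ecoef h n * qf m Sc n) + Rest N + Rm (gk h (m - 1)) N.
Proof.
  intros Hm Hp HC HS.
  exists (fun N => alpha m * (Rm h N - Rm (Derive_n h 1) N) + sumR 1 (m - 2) (fun k => Sc k * Rm (gk h k) N)).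
  split.
  - apply Van_plus.
    + apply Van_scal. apply (Van_plus (Rm h) (fun N => - Rm (Derive_n h 1) N)).
      * apply Van_parseval; auto. apply (C1_D m h HC 0); lia.
      * apply (Van_scal (-1) (Rm (Derive_n h 1))) || idtac.
        intros eps He. destruct (Van_parseval (Derive_n h 1) (per_Derive_n h 1 Hp) (C1_D m h HC 1 ltac:(lia)) eps He) as [N0 H0].
        exists N0. intros N HN. rewrite Rabs_Ropp. apply H0; auto.
    + apply Van_sumR. intros k Hk. apply Van_scal.
      apply Van_parseval.
      * apply per_plus; apply per_Derive_n; auto.
      * apply C1_plus; apply (C1_D m h HC); lia.
  - intros N. rewrite (decomp m h Sc N) by auto.
    assert (Hsplit : forall F : nat -> R, sumR 1 (m - 1) F = sumR 1 (m - 2) F + F (m - 1)%nat).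
    { intros F. replace (m - 1)%nat with (S (m - 2)) at 1 by lia. rewrite sumR_Sr.
      replace (1 + (m - 2))%nat with (m - 1)%nat by lia. reflexivity. }
    rewrite Hsplit. rewrite (S_top m Sc Hm HS). ring.
Qed.

Lemma Top_nonneg m h N : Cm m h -> (2 <= m)%nat -> 0 <= Rm (gk h (m - 1)) N.
Proof.
  intros HC Hm. unfold Rm. pose proof (bessel 0 (gk h (m - 1)) N) as B. rewrite Rplus_0_l in B.
  assert (CI 0 (gk h (m - 1))).
  { apply CI_all. intros x. unfold gk. apply cont_plus; apply (CA_D m h HC); lia. }
  specialize (B H). lra.
Qed.

Lemma Sp_stable h m N x : (m <= N)%nat ->
  (forall n, (m < n)%nat -> Ac 0 h n = 0 /\ As 0 h n = 0) -> Sp 0 h N x = Sp 0 h m x.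
Proof.
  intros HN Hz. unfold Sp, TP. replace (S N) with (S m + (N - m))%nat by lia.
  rewrite sumR_split. rewrite (sumR_ext (0 + S m) (N - m) _ (fun _ => 0)). rewrite sumR_const0. rewrite Rplus_0_r. reflexivity.
  intros k Hk. destruct (Hz k ltac:(lia)) as [E1 E2]. rewrite E1, E2. ring.
Qed.

Lemma eq_trig m h : per h -> (forall y, ex_derive h y) ->
  (forall n, (m < n)%nat -> Ac 0 h n = 0 /\ As 0 h n = 0) -> forall x, h x = Sp 0 h m x.
Proof.
  intros Hp Hd Hz x. apply Rminus_diag_uniq_sym. apply Rabs_eq_0.
  apply Rle_antisym; [|apply Rabs_pos].
  apply Rnot_lt_le. intros Hlt.
  destruct (pointwise h x Hp Hd _ Hlt) as [N0 HN0].
  specialize (HN0 (max N0 m) ltac:(lia)). rewrite (Sp_stable h m (max N0 m) x) in HN0 by (auto; lia). lra.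
Qed.

Theorem proposition2p3 (m : nat) (h : R -> R) (S : nat -> R) :
  (2 <= m)%nat ->
  (forall t, h (t + 2 * PI) = h t) ->
  Cm m h ->
  (forall t, (t - 1) * sumR 1 (m - 1) (fun k => S k * t ^ (k - 1)) = Pm m t - Pm m 1) ->
  let Q :=
    (-1) ^ m / 2 * INR (fact (m - 1)) * INR (fact (m + 1))
      * RInt (fun t => h t ^ 2 - Derive h t ^ 2) 0 (2 * PI)
    + (-1) ^ (m - 1) * (INR (fact m)) ^ 2 / (2 * PI) * (RInt h 0 (2 * PI)) ^ 2
    + sumR 1 (m - 1) (fun k => S k *
        RInt (fun t => (Derive_n h (k + 1) t + Derive_n h (k - 1) t) ^ 2) 0 (2 * PI)) in
  0 <= Q /\
  (Q = 0 <->
   exists alpha beta : nat -> R, forall t,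
     h t = sumR 0 (m + 1) (fun n => alpha n * cos (INR n * t) + beta n * sin (INR n * t))).
Proof.
  intros Hm Hp HC HS Q. rename S into Sc.
  assert (EQ : Q = Qdef m h Sc) by reflexivity.
  clearbody Q.
  destruct (main_decomp m h Sc Hm Hp HC HS) as [Rest [HV HD]].
  assert (Hsum : forall N, 0 <= sumR 0 (S N) (fun n => w n * ecoef h n * qf m Sc n)).
  { intros N. apply sumR_nonneg. intros. apply term_nonneg; auto. }
  assert (Htop : forall N, 0 <= Rm (gk h (m - 1)) N) by (intros; apply Top_nonneg; auto).
  assert (Hd : forall y, ex_derive h y) by (intros; apply (proj1 HC 0%nat); lia).
  split.
  - apply Rnot_lt_le. intros Hneg.
    destruct (HV (- Q / 2) ltac:(lra)) as [N0 H0]. specialize (H0 N0 (le_n _)).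
    specialize (HD N0). specialize (Hsum N0). specialize (Htop N0).
    apply Rabs_le_between in H0. rewrite EQ in Hneg. lra.
  - split.
    + intros HQ0.
      assert (Hz : forall n, (m < n)%nat -> Ac 0 h n = 0 /\ As 0 h n = 0).
      { intros n0 Hn0.
        assert (He : ecoef h n0 = 0).
        { apply Rle_antisym; [|apply ecoef_nonneg]. apply Rnot_lt_le. intros Hpos.
          set (c := w n0 * ecoef h n0 * qf m Sc n0).
          assert (Hc : 0 < c).
          { unfold c. apply Rmult_lt_0_compat. apply Rmult_lt_0_compat. apply w_pos. auto. apply qf_pos; auto. }
          destruct (HV (c / 2) ltac:(lra)) as [N0 H0].
          set (N := max N0 n0).
          specialize (H0 N ltac:(unfold N; lia)). specialize (HD N). specialize (Htop N).
          assert (c <= sumR 0 (S N) (fun n => w n * ecoef h n * qf m Sc n)).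
          { apply (sumR_ge_term 0 (S N) (fun n => w n * ecoef h n * qf m Sc n) n0).
            intros; apply term_nonneg; auto. unfold N; lia. }
          apply Rabs_le_between in H0. rewrite EQ in HQ0. lra. }
        unfold ecoef in He. pose proof (pow2_ge_0 (Ac 0 h n0)). pose proof (pow2_ge_0 (As 0 h n0)).
        simpl in *. split; apply Rsqr_0_uniq; unfold Rsqr; nra. }
      exists (fun n => w n * Ac 0 h n), (fun n => w n * As 0 h n). intros t.
      rewrite (eq_trig m h Hp Hd Hz t). unfold Sp, TP. rewrite Nat.add_1_r. reflexivity.
    + intros [al [be Hh]].
      assert (HT : forall t, h t = TP al be m t).
      { intros t. rewrite Hh. unfold TP. rewrite Nat.add_1_r. reflexivity. }
      assert (Hz : forall n, (m < n)%nat -> ecoef h n = 0).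
      { intros n Hn. unfold ecoef.
        assert (E1 : Ac 0 h n = Ac 0 (TP al be m) n) by (unfold Ac; apply RInt_extR; intros; rewrite HT; reflexivity).
        assert (E2 : As 0 h n = As 0 (TP al be m) n) by (unfold As; apply RInt_extR; intros; rewrite HT; reflexivity).
        rewrite E1, E2, TP_Ac, TP_As.
        destruct (Nat.leb_spec n m). lia. simpl. ring. }
      assert (HS0 : forall N, sumR 0 (S N) (fun n => w n * ecoef h n * qf m Sc n) = 0).
      { intros N. rewrite (sumR_ext _ _ _ (fun _ => 0)). apply sumR_const0.
        intros n _. destruct (le_lt_dec n m).
        - rewrite qf_zero by auto. ring.
        - rewrite Hz by auto. ring. }
      assert (HDT : forall j, exists a1 b1, forall t, Derive_n h j t = TP a1 b1 m t).
      { intros j. destruct (TP_Derive_n al be m j) as [a1 [b1 E]]. exists a1, b1. intros t.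
        rewrite <- E. apply Derive_n_ext. auto. }
      assert (Hg : Van (fun N => Rm (gk h (m - 1)) N)).
      { apply Van_parseval.
        - apply per_plus; apply per_Derive_n; auto.
        - destruct (HDT (m - 1 + 1)%nat) as [a1 [b1 E1]]. destruct (HDT (m - 1 - 1)%nat) as [a2 [b2 E2]].
          apply (C1_ext (fun t => TP a1 b1 m t + TP a2 b2 m t)).
          intros t. unfold gk. rewrite E1, E2. reflexivity.
          apply C1_plus; apply C1_TP. }
      pose proof (Van_plus _ _ HV Hg) as HV2.
      apply Rabs_eq_0. apply Rle_antisym; [|apply Rabs_pos].
      apply Rnot_lt_le. intros Hlt.
      destruct (HV2 (Rabs Q / 2) ltac:(lra)) as [N0 H0]. specialize (H0 N0 (le_n _)).
      specialize (HD N0). rewrite HS0, Rplus_0_l in HD. rewrite <- EQ in HD. rewrite <- HD in H0. lra.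
Qed.
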